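(* Let $\Lambda_1,\Lambda_2\in\mathcal{M}_2$. If $\widehat{\Lambda_1}$ or $\widehat{\Lambda_2}$ is differentiable, then $\widehat{\Lambda_1*\Lambda_2}$ is differentiable.
   Context: $\mathcal{M}_2$ is the set of bivariate tail dependence functions $\Lambda(\mathbf{w})=\lim_{s\searrow0}C(s\mathbf{w})/s$, $\mathbf{w}\in\mathbb{R}_+^2$ ($\mathbb{R}_+=[0,\infty)$), of $2$-copulas $C$; they are concave, $1$-Lipschitz and positively homogeneous of order $1$. For $\Lambda\in\mathcal{M}_2$ write $\widehat{\Lambda}(t):=\Lambda(t,1-t)$ for $t\in[0,1]$. The Markov product of $\Lambda_1,\Lambda_2\in\mathcal{M}_2$ is $(\Lambda_1*\Lambda_2)(w_1,w_2):=\int_0^\infty\partial_2\Lambda_1(w_1,t)\,\partial_1\Lambda_2(t,w_2)\,dt$, again an element of $\mathcal{M}_2$. *)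

(* Defs.v *)
From Stdlib Require Import Reals.
From Coquelicot Require Import Coquelicot.
Open Scope R_scope.

(* A bivariate copula C : [0,1]^2 -> [0,1] (values outside [0,1]^2 irrelevant). *)
Definition is_copula2 (C : R -> R -> R) : Prop :=
  (forall u v, 0 <= u <= 1 -> 0 <= v <= 1 -> 0 <= C u v <= 1) /\
  (forall u, 0 <= u <= 1 -> C u 0 = 0 /\ C 0 u = 0) /\
  (forall u, 0 <= u <= 1 -> C u 1 = u /\ C 1 u = u) /\
  (forall u1 u2 v1 v2, 0 <= u1 -> u1 <= u2 -> u2 <= 1 ->
      0 <= v1 -> v1 <= v2 -> v2 <= 1 ->
      C u2 v2 - C u2 v1 - C u1 v2 + C u1 v1 >= 0).

Definition is_tdf_of (C : R -> R -> R) (L : R -> R -> R) : Prop :=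
  forall w1 w2, 0 <= w1 -> 0 <= w2 ->
    filterlim (fun s => C (s * w1) (s * w2) / s) (at_right 0) (locally (L w1 w2)).

(* M_2 : tail dependence functions of 2-copulas (only values on R_+^2 matter). *)
Definition in_M2 (L : R -> R -> R) : Prop :=
  exists C, is_copula2 C /\ is_tdf_of C L.

Definition markov_prod (L1 L2 : R -> R -> R) : R -> R -> R :=
  fun w1 w2 =>
    RInt_gen (fun t => Derive (fun s => L1 w1 s) t * Derive (fun s => L2 s w2) t)
             (at_point 0) (Rbar_locally p_infty).

Definition hat (L : R -> R -> R) : R -> R := fun t => L t (1 - t).

Definition hat_differentiable (L : R -> R -> R) : Prop :=
  forall t, 0 < t < 1 -> ex_derive (hat L) t.

(* Main.v *)
Require Import Defs.
From Stdlib Require Import Reals.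
From Coquelicot Require Import Coquelicot.
From Stdlib Require Import Lra Lia Classical FunctionalExtensionality.
Open Scope R_scope.

Definition ind (th v : R) : R := if Rle_dec th v then 1 else 0.


Lemma RChasles (f:R->R) a b c l1 l2 :
  is_RInt f a b l1 -> is_RInt f b c l2 -> is_RInt f a c (l1 + l2).
Proof. intros H1 H2; exact (is_RInt_Chasles f a b c l1 l2 H1 H2). Qed.

Lemma Rconst a b (v : R) : is_RInt (fun _ => v) a b ((b - a) * v).
Proof. exact (is_RInt_const a b v). Qed.

Lemma Rzero_int a b : is_RInt (fun _ => 0) a b 0.
Proof. assert (H := Rconst a b 0). replace ((b - a) * 0) with 0 in H by ring. exact H. Qed.

Lemma Rplus_int (f g : R -> R) a b l1 l2 :
  is_RInt f a b l1 -> is_RInt g a b l2 -> is_RInt (fun x => f x + g x) a b (l1 + l2).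
Proof. intros H1 H2; exact (is_RInt_plus f g a b l1 l2 H1 H2). Qed.

Lemma Rminus_int (f g : R -> R) a b l1 l2 :
  is_RInt f a b l1 -> is_RInt g a b l2 -> is_RInt (fun x => f x - g x) a b (l1 - l2).
Proof. intros H1 H2; exact (is_RInt_minus f g a b l1 l2 H1 H2). Qed.

Lemma Rscal_int (f : R -> R) a b k l :
  is_RInt f a b l -> is_RInt (fun x => k * f x) a b (k * l).
Proof. intros H; exact (is_RInt_scal f a b k l H). Qed.

Lemma Rcorrect (f : R -> R) a b : ex_RInt f a b -> is_RInt f a b (RInt f a b).
Proof. intros H; exact (RInt_correct f a b H). Qed.

Lemma Rchasles1 (f : R -> R) a b c : a <= b <= c -> ex_RInt f a c -> ex_RInt f a b.
Proof. intros H1 H2; exact (ex_RInt_Chasles_1 f a b c H1 H2). Qed.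

Lemma Rchasles2 (f : R -> R) a b c : a <= b <= c -> ex_RInt f a c -> ex_RInt f b c.
Proof. intros H1 H2; exact (ex_RInt_Chasles_2 f a b c H1 H2). Qed.

Lemma Rext (f g : R -> R) a b l :
  (forall x, Rmin a b < x < Rmax a b -> f x = g x) -> is_RInt f a b l -> is_RInt g a b l.
Proof. intros H1 H2; exact (is_RInt_ext f g a b l H1 H2). Qed.

Lemma Runique (f : R -> R) a b l : is_RInt f a b l -> RInt f a b = l.
Proof. intros H; exact (is_RInt_unique f a b l H). Qed.

Lemma decr_level (h : R -> R) (a b th : R) :
  a <= b -> (forall x y, a <= x -> x <= y -> y <= b -> h y <= h x) ->
  exists c, a <= c <= b /\ (forall x, a < x < c -> th <= h x) /\
            (forall x, c < x < b -> h x < th).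
Proof.
  intros Hab Hd.
  set (E := fun x => a <= x <= b /\ (x = a \/ th <= h x)).
  assert (HB : bound E) by (exists b; intros x [Hx _]; lra).
  assert (HE : exists x, E x) by (exists a; split; [lra| now left]).
  destruct (completeness E HB HE) as [c [Hub Hlub]].
  assert (Hac : a <= c) by (apply Hub; split; [lra| now left]).
  assert (Hcb : c <= b) by (apply Hlub; intros x [Hx _]; lra).
  exists c; split; [lra|split].
  - intros x Hx.
    destruct (classic (exists y, E y /\ x < y)) as [[y [[Hy1 Hy2] Hxy]]|Hn].
    + destruct Hy2 as [Hy2|Hy2]; [lra|].
      apply Rle_trans with (h y); [exact Hy2| apply Hd; lra].
    + exfalso.
      assert (c <= x); [|lra].
      apply Hlub. intros y Hy. destruct (Rle_dec y x) as [?|Hyx]; [auto|].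
      exfalso; apply Hn; exists y; split; [auto|lra].
  - intros x Hx. destruct (Rlt_dec (h x) th) as [?|Hn]; [auto|].
    exfalso. assert (x <= c); [|lra]. apply Hub. split; [lra|right; lra].
Qed.

Lemma is_RInt_ind (f h : R -> R) (a b th : R) :
  a <= b -> (forall x y, a <= x -> x <= y -> y <= b -> h y <= h x) ->
  ex_RInt f a b ->
  exists c, a <= c <= b /\
    is_RInt (fun x => f x * ind th (h x)) a b (RInt f a c).
Proof.
  intros Hab Hd Hf.
  destruct (decr_level h a b th Hab Hd) as [c [Hc [H1 H2]]].
  exists c; split; [auto|].
  assert (Hfc : ex_RInt f a c) by (apply Rchasles1 with b; [lra|auto]).
  replace (RInt f a c) with (RInt f a c + (b - c) * 0) by ring.
  apply RChasles with c.
  - apply Rext with f; [|apply Rcorrect; auto].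
    intros x Hx. rewrite Rmin_left in Hx by lra. rewrite Rmax_right in Hx by lra.
    unfold ind. destruct (Rle_dec th (h x)) as [_|Hn]; [ring|].
    exfalso; apply Hn; apply H1; lra.
  - apply Rext with (fun _ => 0).
    + intros x Hx. rewrite Rmin_left in Hx by lra. rewrite Rmax_right in Hx by lra.
      unfold ind. destruct (Rle_dec th (h x)) as [Hl|_]; [|ring].
      specialize (H2 x Hx); lra.
    + apply Rconst.
Qed.

Fixpoint lev (e : R) (N : nat) (v : R) : R :=
  match N with
  | O => 0
  | S n => lev e n v + e * ind (INR (S n) * e) v
  end.

Lemma lev_spec e N v : 0 < e -> 0 <= v ->
  (INR N * e <= v -> lev e N v = INR N * e) /\
  (v < INR N * e -> v - e < lev e N v <= v).
Proof.
  intros He Hv. induction N as [|n IH].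
  - simpl. split; intros; lra.
  - destruct IH as [IH1 IH2].
    cbn [lev]. unfold ind.
    destruct (Rle_dec (INR (S n) * e) v) as [Hl|Hl]; rewrite S_INR in *.
    + split; intros H.
      * rewrite IH1 by nra. ring.
      * lra.
    + split; intros H; [lra|].
      destruct (Rle_dec (INR n * e) v) as [H2|H2].
      * rewrite IH1 by auto. nra.
      * specialize (IH2 ltac:(lra)). lra.
Qed.

Lemma lev_approx e N v : 0 < e -> 0 <= v <= INR N * e -> v - e < lev e N v <= v.
Proof.
  intros He Hv. destruct (lev_spec e N v He (proj1 Hv)) as [H1 H2].
  destruct (Rle_dec (INR N * e) v) as [H|H].
  - rewrite H1 by auto. lra.
  - apply H2; lra.
Qed.

Lemma lev_nonneg e N v : 0 < e -> 0 <= lev e N v.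
Proof.
  intros He; induction N as [|n IH]; simpl; [lra|].
  unfold ind; destruct Rle_dec; nra.
Qed.

Lemma lev_le e N v : 0 < e -> 0 <= v -> lev e N v <= v.
Proof.
  intros He Hv. destruct (lev_spec e N v He Hv) as [H1 H2].
  destruct (Rle_dec (INR N * e) v) as [H|H].
  - rewrite H1 by auto. lra.
  - apply H2; lra.
Qed.

Lemma lev_int (f h : R -> R) a b e N M :
  a <= b -> (forall x y, a <= x -> x <= y -> y <= b -> h y <= h x) ->
  ex_RInt f a b -> 0 < e ->
  (forall x, a <= x <= b -> Rabs (RInt f a x) <= M) ->
  exists v, is_RInt (fun x => f x * lev e N (h x)) a b v /\
            Rabs v <= M * lev e N (h a).
Proof.
  intros Hab Hd Hf He HM.
  assert (HM0 : 0 <= M) by (apply Rle_trans with (Rabs (RInt f a a)); [apply Rabs_pos|apply HM; lra]).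
  induction N as [|n IH].
  - exists 0; split.
    + apply Rext with (fun _ => 0).
      * intros x _; simpl; ring.
      * apply Rzero_int.
    + simpl. rewrite Rabs_R0. lra.
  - destruct IH as [v [Hv Hvb]].
    set (th := INR (S n) * e).
    destruct (Rle_dec th (h a)) as [Hth|Hth].
    + destruct (is_RInt_ind f h a b th Hab Hd Hf) as [c [Hc Hi]].
      exists (v + e * RInt f a c); split.
      * apply Rext with (fun x => f x * lev e n (h x) + e * (f x * ind th (h x))).
        -- intros x _. cbn [lev]. fold th. ring.
        -- apply Rplus_int; [auto|apply Rscal_int; auto].
      * cbn [lev]. fold th. unfold ind at 1. destruct (Rle_dec th (h a)) as [_|]; [|contradiction].
        specialize (HM c Hc).
        apply Rle_trans with (Rabs v + Rabs (e * RInt f a c)); [apply Rabs_triang|].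
        rewrite Rabs_mult, (Rabs_right e) by lra. nra.
    + exists v; split.
      * apply Rext with (fun x => f x * lev e n (h x) + e * 0).
        -- intros x Hx. rewrite Rmin_left in Hx by lra. rewrite Rmax_right in Hx by lra.
           cbn [lev]. fold th. unfold ind.
           destruct (Rle_dec th (h x)) as [Hl|]; [|ring].
           exfalso. apply Hth. apply Rle_trans with (h x); [auto| apply Hd; lra].
        -- assert (H0 : is_RInt (fun x : R => e * 0) a b 0)
             by (apply Rext with (fun _ => 0); [intros; ring| apply Rzero_int]).
           assert (H1 := Rplus_int _ _ a b v 0 Hv H0). rewrite Rplus_0_r in H1. exact H1.
      * cbn [lev]. fold th. unfold ind at 1. destruct (Rle_dec th (h a)); [contradiction|].
        lra.
Qed.

Lemma ex_RInt_decr (h : R -> R) a b :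
  a <= b -> (forall x y, a <= x -> x <= y -> y <= b -> h y <= h x) -> ex_RInt h a b.
Proof.
  intros Hab Hd.
  set (cl := fun x => Rmax a (Rmin b x)).
  assert (Hcl : forall x, a <= cl x <= b).
  { intros x; unfold cl, Rmax, Rmin; repeat destruct Rle_dec; lra. }
  assert (Hclm : forall x y, x <= y -> cl x <= cl y).
  { intros x y Hxy; unfold cl, Rmax, Rmin; repeat destruct Rle_dec; lra. }
  assert (Hclid : forall x, a <= x <= b -> cl x = x).
  { intros x Hx; unfold cl, Rmax, Rmin; repeat destruct Rle_dec; lra. }
  set (k := fun x => h (cl x) - h b).
  set (K := h a - h b).
  assert (Hk : forall x, 0 <= k x <= K).
  { intros x; unfold k, K. specialize (Hcl x).
    split; [assert (h b <= h (cl x)) by (apply Hd; lra); lra|].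
    assert (h (cl x) <= h a) by (apply Hd; lra); lra. }
  assert (Hkd : forall x y, x <= y -> k y <= k x).
  { intros x y Hxy; unfold k. assert (h (cl y) <= h (cl x)); [|lra].
    apply Hd; [apply Hcl|apply Hclm; auto|apply Hcl]. }
  destruct (INR_unbounded K) as [Nk HNk].
  set (e := fun n : nat => / (INR n + 1)).
  assert (He : forall n, 0 < e n).
  { intros n; unfold e; apply Rinv_0_lt_compat. pose proof (pos_INR n); lra. }
  set (g := fun n : nat => fun x => lev (e n) (Nk * S n) (k x)).
  assert (Hg : forall n x, Rabs (g n x - k x) < e n).
  { intros n x. unfold g.
    assert (HN : INR (Nk * S n) * e n = INR Nk).
    { unfold e. rewrite mult_INR, S_INR. field. pose proof (pos_INR n); lra. }
    assert (Ha := lev_approx (e n) (Nk * S n) (k x) (He n) ltac:(rewrite HN; specialize (Hk x); lra)).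
    apply Rabs_def1; lra. }
  assert (Hgi : forall n, is_RInt (g n) a b (RInt (g n) a b)).
  { intros n.
    destruct (lev_int (fun _ => 1) k a b (e n) (Nk * S n) (b - a) Hab
               ltac:(intros; apply Hkd; lra) ltac:(apply ex_RInt_const) (He n)) as [v [Hv _]].
    { intros x Hx. assert (Hi := Rconst a x 1).
      rewrite (Runique _ _ _ _ Hi). rewrite Rabs_right; lra. }
    assert (Hv' : is_RInt (g n) a b v).
    { apply Rext with (fun x => 1 * lev (e n) (Nk * S n) (k x)); [intros; unfold g; ring|auto]. }
    rewrite (Runique _ _ _ _ Hv'). auto. }
  destruct (filterlim_RInt (V := R_CompleteNormedModule) g a b eventually _ k (fun n => RInt (g n) a b) Hgi) as [If [_ HIf]].
  - intros P [eps HP].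
    destruct (INR_unbounded (/ eps)) as [n0 Hn0].
    exists n0. intros n Hn. apply HP. intros t.
    change (Rabs (g n t - k t) < eps).
    apply Rlt_le_trans with (e n); [apply Hg|].
    unfold e. apply Rle_trans with (/ (INR n0 + 1)).
    + apply Rinv_le_contravar; [pose proof (pos_INR n0); lra|].
      apply le_INR in Hn. lra.
    + assert (0 < / eps) by (apply Rinv_0_lt_compat; apply cond_pos).
      rewrite <- (Rinv_inv eps). apply Rinv_le_contravar; lra.
  - exists (If + (b - a) * h b).
    apply Rext with (fun x => k x + h b).
    + intros x Hx. rewrite Rmin_left in Hx by lra. rewrite Rmax_right in Hx by lra.
      unfold k. rewrite Hclid by lra. ring.
    + apply Rplus_int; [exact HIf|apply Rconst].
Qed.

Lemma ex_RInt_incr (h : R -> R) a b :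
  a <= b -> (forall x y, a <= x -> x <= y -> y <= b -> h x <= h y) -> ex_RInt h a b.
Proof.
  intros Hab Hi.
  assert (H : ex_RInt (fun x => - h x) a b).
  { apply ex_RInt_decr; auto. intros x y H1 H2 H3. specialize (Hi x y H1 H2 H3). lra. }
  destruct H as [l Hl]. exists (-l).
  apply Rext with (fun x => 0 - (- h x)); [intros; ring|].
  replace (-l) with (0 - l) by ring. apply Rminus_int; [apply Rzero_int|auto].
Qed.

Lemma ex_RInt_decr_oc (h : R -> R) a b K :
  a <= b -> (forall x y, a < x -> x <= y -> y <= b -> h y <= h x) ->
  (forall x, a < x <= b -> h x <= K) -> ex_RInt h a b.
Proof.
  intros Hab Hd HK.
  set (h' := fun x => if Rle_dec x a then K else h x).
  assert (H : ex_RInt h' a b).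
  { apply ex_RInt_decr; auto. intros x y H1 H2 H3. unfold h'.
    destruct (Rle_dec y a); destruct (Rle_dec x a); try lra.
    - apply HK; lra.
    - apply Hd; lra. }
  destruct H as [l Hl]. exists l. apply Rext with h'; auto.
  intros x Hx. rewrite Rmin_left in Hx by lra. rewrite Rmax_right in Hx by lra.
  unfold h'. destruct (Rle_dec x a); [lra|auto].
Qed.

Lemma abel (f h : R -> R) a b C M :
  a <= b -> (forall x y, a <= x -> x <= y -> y <= b -> h y <= h x) ->
  (forall x, a <= x <= b -> 0 <= h x) ->
  ex_RInt f a b -> ex_RInt (fun x => f x * h x) a b ->
  (forall x, a <= x <= b -> Rabs (f x) <= C) ->
  (forall x, a <= x <= b -> Rabs (RInt f a x) <= M) ->
  Rabs (RInt (fun x => f x * h x) a b) <= M * h a.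
Proof.
  intros Hab Hd Hp Hf Hfh HC HM.
  assert (HM0 : 0 <= M) by (apply Rle_trans with (Rabs (RInt f a a)); [apply Rabs_pos|apply HM; lra]).
  assert (HC0 : 0 <= C) by (apply Rle_trans with (Rabs (f a)); [apply Rabs_pos|apply HC; lra]).
  assert (Hha : 0 <= h a) by (apply Hp; lra).
  apply le_epsilon. intros eps Heps.
  set (e := eps / ((b - a) * C + 1)).
  assert (HD : 0 < (b - a) * C + 1) by nra.
  assert (He : 0 < e) by (unfold e; apply Rdiv_lt_0_compat; lra).
  destruct (INR_unbounded (h a / e)) as [N HN].
  assert (HNe : h a <= INR N * e).
  { apply Rmult_gt_compat_r with (r := e) in HN; [|lra].
    unfold Rdiv in HN. rewrite Rmult_assoc, Rinv_l in HN by lra. lra. }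
  destruct (lev_int f h a b e N M Hab Hd Hf He HM) as [v [Hv Hvb]].
  assert (Hlev : lev e N (h a) <= h a) by (apply lev_le; lra).
  set (I := RInt (fun x => f x * h x) a b).
  assert (HI : is_RInt (fun x => f x * h x) a b I) by (apply Rcorrect; auto).
  assert (Hdiff := Rminus_int _ _ a b I v HI Hv).
  assert (Hb : Rabs (I - v) <= (b - a) * (C * e)).
  { rewrite <- (Runique _ _ _ _ Hdiff).
    apply abs_RInt_le_const; [auto| eexists; exact Hdiff|].
    intros t Ht.
    assert (Hht : 0 <= h t <= INR N * e).
    { split; [apply Hp; auto|]. apply Rle_trans with (h a); [apply Hd; lra|auto]. }
    assert (Hl := lev_approx e N (h t) He Hht).
    replace (f t * h t - f t * lev e N (h t)) with (f t * (h t - lev e N (h t))) by ring.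
    rewrite Rabs_mult. apply Rmult_le_compat; try apply Rabs_pos; [apply HC; auto|].
    rewrite Rabs_right; lra. }
  assert (Hee : (b - a) * (C * e) <= eps).
  { unfold e. replace ((b - a) * (C * (eps / ((b - a) * C + 1)))) with
      (eps * (((b - a) * C) / ((b - a) * C + 1))) by (field; lra).
    assert (((b - a) * C) / ((b - a) * C + 1) <= 1).
    { apply Rmult_le_reg_r with ((b - a) * C + 1); [lra|].
      unfold Rdiv; rewrite Rmult_assoc, Rinv_l by lra. nra. }
    nra. }
  fold I.
  assert (Rabs I <= Rabs v + Rabs (I - v)).
  { replace I with (v + (I - v)) at 1 by ring. apply Rabs_triang. }
  nra.
Qed.

Lemma is_RInt_gen_lim (f : R -> R) l :
  (forall B, 0 < B -> ex_RInt f 0 B) ->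
  filterlim (fun B => RInt f 0 B) (Rbar_locally p_infty) (locally l) ->
  is_RInt_gen f (at_point 0) (Rbar_locally p_infty) l.
Proof.
  intros Hex Hl P HP.
  destruct (Hl P HP) as [M HM].
  apply Filter_prod with (fun a => a = 0) (fun b => Rmax M 0 < b).
  - reflexivity.
  - exists (Rmax M 0). auto.
  - intros x y -> Hy. simpl. exists (RInt f 0 y). split.
    + apply Rcorrect. apply Hex. pose proof (Rmax_r M 0). lra.
    + apply HM. pose proof (Rmax_l M 0). lra.
Qed.

Lemma RInt_gen_lim (f : R -> R) l :
  (forall B, 0 < B -> ex_RInt f 0 B) ->
  filterlim (fun B => RInt f 0 B) (Rbar_locally p_infty) (locally l) ->
  RInt_gen f (at_point 0) (Rbar_locally p_infty) = l.
Proof.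
  intros H1 H2. apply is_RInt_gen_unique. apply is_RInt_gen_lim; auto.
Qed.

Lemma incr_bounded_lim (I : R -> R) K :
  (forall x y, 0 < x -> x <= y -> I x <= I y) -> (forall x, 0 < x -> I x <= K) ->
  exists l, filterlim I (Rbar_locally p_infty) (locally l) /\ (forall x, 0 < x -> I x <= l).
Proof.
  intros Hi HK.
  set (E := fun v => exists x, 0 < x /\ v = I x).
  assert (HB : bound E) by (exists K; intros v [x [Hx ->]]; apply HK; auto).
  assert (HE : exists v, E v) by (exists (I 1); exists 1; split; [lra|auto]).
  destruct (completeness E HB HE) as [l [Hub Hlub]].
  assert (Hle : forall x, 0 < x -> I x <= l) by (intros x Hx; apply Hub; exists x; auto).
  exists l; split; auto.
  intros P [eps HP].
  destruct (classic (exists x0, 0 < x0 /\ l - eps < I x0)) as [[x0 [Hx0 Hl0]]|Hn].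
  - exists x0. intros x Hx. apply HP. change (Rabs (I x - l) < eps).
    assert (I x0 <= I x) by (apply Hi; lra).
    assert (I x <= l) by (apply Hle; lra).
    apply Rabs_def1; pose proof (cond_pos eps); lra.
  - exfalso. assert (l <= l - eps); [|pose proof (cond_pos eps); lra].
    apply Hlub. intros v [x [Hx ->]].
    destruct (Rle_dec (I x) (l - eps)) as [?|Hn2]; auto.
    exfalso; apply Hn; exists x; split; [auto|lra].
Qed.


Definition phi_ok (phi : R -> R) : Prop :=
  phi 0 = 0 /\
  (forall y z, 0 <= y <= z -> 0 <= phi z - phi y <= z - y) /\
  (forall y, 0 <= y -> phi y <= 1) /\
  (forall l y z, 0 < l <= 1 -> 0 <= y <= z -> l * (phi z - phi y) <= phi (l * z) - phi (l * y)).

Lemma bernoulli (e : R) (n : nat) : 0 <= e -> 1 + INR n * e <= (1 + e) ^ n.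
Proof.
  intros He. induction n as [|n IH]; [simpl; lra|].
  rewrite S_INR. change ((1+e)^(S n)) with ((1+e)*(1+e)^n). assert (0 <= INR n) by apply pos_INR. nra.
Qed.

Lemma nat_step (P : nat -> Prop) n : P 0%nat -> ~ P n -> exists j, P j /\ ~ P (S j).
Proof.
  intros H0. induction n as [|n IH]; intros Hn; [contradiction|].
  destruct (classic (P n)) as [Hp|Hp]; [exists n; auto|apply IH; auto].
Qed.


Lemma grid_sum (phi p d : nat -> R) (sigma : R) (i n : nat) :
  (forall l, d l * (p (S l) - p l) = phi (S l) - phi l) ->
  (forall l, p l <= p (S l)) ->
  (forall l, (i <= l < i + n)%nat -> sigma <= d l) ->
  sigma * (p (i + n)%nat - p i) <= phi (i + n)%nat - phi i.
Proof.
  intros Hd Hp Hs. induction n as [|n IH].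
  - rewrite Nat.add_0_r. lra.
  - replace (i + S n)%nat with (S (i + n)) by lia.
    assert (IH' := IH ltac:(intros l Hl; apply Hs; lia)).
    specialize (Hd (i + n)%nat). specialize (Hs (i + n)%nat ltac:(lia)).
    specialize (Hp (i + n)%nat). nra.
Qed.

Lemma grid_sum_up (phi p d : nat -> R) (sigma : R) (i n : nat) :
  (forall l, d l * (p (S l) - p l) = phi (S l) - phi l) ->
  (forall l, p l <= p (S l)) ->
  (forall l, (i <= l < i + n)%nat -> d l <= sigma) ->
  phi (i + n)%nat - phi i <= sigma * (p (i + n)%nat - p i).
Proof.
  intros Hd Hp Hs. induction n as [|n IH].
  - rewrite Nat.add_0_r. lra.
  - replace (i + S n)%nat with (S (i + n)) by lia.
    assert (IH' := IH ltac:(intros l Hl; apply Hs; lia)).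
    specialize (Hd (i + n)%nat). specialize (Hs (i + n)%nat ltac:(lia)).
    specialize (Hp (i + n)%nat). nra.
Qed.

Lemma grid_concave (phi p d : nat -> R) (j k : nat) :
  (forall l, d l * (p (S l) - p l) = phi (S l) - phi l) ->
  (forall l, p l <= p (S l)) ->
  (forall l, d (S l) <= d l) ->
  (j <= k)%nat ->
  (phi k - phi j) * (p j - p 0%nat) <= (phi j - phi 0%nat) * (p k - p j).
Proof.
  intros Hd Hp Hdd Hjk.
  assert (Hdm : forall l m, (l <= m)%nat -> d m <= d l).
  { intros l m Hlm. induction Hlm; [lra|]. specialize (Hdd m). lra. }
  assert (Hpm : forall l m, (l <= m)%nat -> p l <= p m).
  { intros l m Hlm. induction Hlm; [lra|]. specialize (Hp m). lra. }
  assert (H1 := grid_sum phi p d (d j) 0 j Hd Hp ltac:(intros l Hl; apply Hdm; lia)).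
  assert (H2 := grid_sum_up phi p d (d j) j (k - j) Hd Hp ltac:(intros l Hl; apply Hdm; lia)).
  replace (j + (k - j))%nat with k in H2 by lia. simpl in H1.
  assert (p 0%nat <= p j) by (apply Hpm; lia).
  assert (p j <= p k) by (apply Hpm; lia).
  nra.
Qed.

Lemma phi_lip phi : phi_ok phi -> forall y z, 0 <= y <= z -> 0 <= phi z - phi y <= z - y.
Proof. intros [_ [H _]]; exact H. Qed.

Lemma phi_concave_approx phi x y z eta :
  phi_ok phi -> 0 < x -> x < y -> y < z -> 0 < eta -> eta <= 1 ->
  (phi z - phi y) * (y - x) <= (phi y - phi x) * (z - y) + 5 * eta * (z * z).
Proof.
  intros Hphi Hx Hxy Hyz He He1.
  pose proof Hphi as [H0 [Hm [H1 HP]]].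
  set (rho := 1 + eta).
  set (p := fun l : nat => x * rho ^ l).
  set (F := fun l : nat => phi (p l)).
  set (d := fun l : nat => (F (S l) - F l) / (p (S l) - p l)).
  assert (Hrho : 1 < rho) by (unfold rho; lra).
  assert (Hpos : forall l, 0 < rho ^ l) by (intros; apply pow_lt; lra).
  assert (HpS : forall l, p (S l) = rho * p l) by (intros; unfold p; simpl; ring).
  assert (Hp0 : forall l, 0 < p l) by (intros; unfold p; specialize (Hpos l); nra).
  assert (Hgap : forall l, p (S l) - p l = eta * p l) by (intros; rewrite HpS; unfold rho; ring).
  assert (Hd : forall l, d l * (p (S l) - p l) = F (S l) - F l).
  { intros l. unfold d. field. rewrite Hgap. specialize (Hp0 l). nra. }
  assert (Hp : forall l, p l <= p (S l)).
  { intros l. assert (Hg := Hgap l). specialize (Hp0 l). nra. }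
  assert (Hdd : forall l, d (S l) <= d l).
  { intros l. unfold d. rewrite !Hgap.
    assert (HPl := HP (/ rho) (p (S l)) (p (S (S l)))).
    rewrite (HpS (S l)), (HpS l) in HPl.
    replace (/ rho * (rho * (rho * p l))) with (rho * p l) in HPl by (field; lra).
    replace (/ rho * (rho * p l)) with (p l) in HPl by (field; lra).
    assert (Hir : 0 < / rho <= 1).
    { split; [apply Rinv_0_lt_compat; lra|]. rewrite <- Rinv_1. apply Rinv_le_contravar; lra. }
    assert (0 < rho * p l) by (specialize (Hp0 l); nra).
    assert (rho * p l <= rho * (rho * p l)) by (specialize (Hp0 l); nra).
    specialize (HPl Hir ltac:(split; lra)).
    unfold F. rewrite (HpS (S l)), (HpS l).
    specialize (Hp0 l).
    apply Rmult_le_reg_r with (eta * (rho * p l)); [nra|].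
    unfold Rdiv. rewrite Rmult_assoc, Rinv_l by nra.
    replace ((phi (rho * p l) - phi (p l)) * / (eta * p l) * (eta * (rho * p l)))
      with (rho * (phi (rho * p l) - phi (p l))) by (field; nra).
    apply Rmult_le_reg_l with (/ rho); [apply Rinv_0_lt_compat; lra|].
    replace (/ rho * (rho * (phi (rho * p l) - phi (p l)))) with (phi (rho * p l) - phi (p l)) by (field; lra).
    lra. }
  assert (Hunb : forall w, exists n, w < p n).
  { intros w. destruct (INR_unbounded (w / (x * eta))) as [n Hn]. exists n.
    unfold p. fold rho. apply Rlt_le_trans with (x * (1 + INR n * eta)).
    - apply Rmult_gt_compat_r with (r := x * eta) in Hn; [|nra].
      unfold Rdiv in Hn. rewrite Rmult_assoc, Rinv_l in Hn by nra. nra.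
    - apply Rmult_le_compat_l; [lra|]. apply bernoulli; lra. }
  destruct (Hunb y) as [ny Hny]. destruct (Hunb z) as [nz Hnz].
  assert (Hp00 : p 0%nat = x) by (unfold p; simpl; ring).
  destruct (nat_step (fun i => p i <= y) ny ltac:(simpl; lra) ltac:(simpl; lra)) as [j [Hj1 Hj2]].
  destruct (nat_step (fun i => p i <= z) nz ltac:(simpl; lra) ltac:(simpl; lra)) as [k [Hk1 Hk2]].
  simpl in Hj1, Hj2, Hk1, Hk2.
  assert (Hpm : forall l m, (l <= m)%nat -> p l <= p m).
  { intros l m Hlm. induction Hlm; [lra|]. specialize (Hp m). lra. }
  assert (Hjk : (j <= k)%nat).
  { destruct (Nat.le_gt_cases j k) as [?|Hkj]; auto. exfalso.
    assert (p (S k) <= p j) by (apply Hpm; lia). lra. }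
  assert (Hgc := grid_concave F p d j k Hd Hp Hdd Hjk).
  rewrite Hp00 in Hgc. unfold F in Hgc. rewrite Hp00 in Hgc.
  set (u := p j) in *. set (v := p k) in *.
  assert (Hux : x <= u) by (rewrite <- Hp00; apply Hpm; lia).
  assert (Huv : u <= v) by (apply Hpm; auto).
  assert (Hu : y - u <= eta * y).
  { rewrite HpS in Hj2. fold u in Hj2. unfold rho in Hj2. nra. }
  assert (Hv : z - v <= eta * z).
  { rewrite HpS in Hk2. fold v in Hk2. unfold rho in Hk2. nra. }
  assert (A1 := Hm u y ltac:(lra)).
  assert (A2 := Hm v z ltac:(lra)).
  assert (A3 := Hm x u ltac:(lra)).
  assert (A4 := Hm u v ltac:(lra)).
  assert (A5 := Hm x y ltac:(lra)).
  assert (A6 := Hm y z ltac:(lra)).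
  assert (B1 : phi z - phi y <= (phi v - phi u) + eta * z) by lra.
  assert (B2 : y - x <= (u - x) + eta * y) by lra.
  assert (B3 : (phi z - phi y) * (y - x) <= ((phi v - phi u) + eta * z) * ((u - x) + eta * y)).
  { apply Rmult_le_compat; lra. }
  assert (B4 : (phi u - phi x) * (v - u) <= (phi y - phi x) * (z - y + eta * y)).
  { apply Rmult_le_compat; lra. }
  assert (B5 : phi v - phi u <= z) by lra.
  assert (B6 : u - x <= z) by lra.
  assert (B7 : phi y - phi x <= z) by lra.
  assert (eta * z * (u - x) <= eta * z * z) by (apply Rmult_le_compat_l; nra).
  assert ((phi v - phi u) * (eta * y) <= z * (eta * z)) by (apply Rmult_le_compat; nra).
  assert (eta * z * (eta * y) <= eta * z * z) by (apply Rmult_le_compat_l; nra).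
  assert ((phi y - phi x) * (eta * y) <= z * (eta * z)) by (apply Rmult_le_compat; nra).
  nra.
Qed.

Lemma phi_concave phi x y z :
  phi_ok phi -> 0 < x -> x < y -> y < z ->
  (phi z - phi y) * (y - x) <= (phi y - phi x) * (z - y).
Proof.
  intros Hphi Hx Hxy Hyz.
  apply le_epsilon. intros eps Heps.
  assert (Hzz : 0 < 5 * (z * z)) by nra.
  set (eta := Rmin 1 (eps / (5 * (z * z)))).
  assert (He : 0 < eta) by (apply Rmin_pos; [lra|apply Rdiv_lt_0_compat; lra]).
  assert (He1 : eta <= 1) by apply Rmin_l.
  assert (He2 : eta <= eps / (5 * (z * z))) by apply Rmin_r.
  assert (H := phi_concave_approx phi x y z eta Hphi Hx Hxy Hyz He He1).
  assert (5 * eta * (z * z) <= eps).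
  { apply Rmult_le_compat_r with (r := 5 * (z * z)) in He2; [|lra].
    replace (eps / (5 * (z * z)) * (5 * (z * z))) with eps in He2 by (field; nra). nra. }
  lra.
Qed.


Lemma seq_at_right : filterlim (fun n : nat => 0 + / (INR n + 1)) eventually (at_right 0).
Proof.
  intros P [eps HP].
  destruct (INR_unbounded (/ eps)) as [n0 Hn0].
  exists n0. intros n Hn. apply HP.
  - change (Rabs (0 + / (INR n + 1) - 0) < eps).
    assert (Hp : 0 < INR n + 1) by (pose proof (pos_INR n); lra).
    rewrite Rplus_0_l, Rminus_0_r, Rabs_right by (left; apply Rinv_0_lt_compat; lra).
    apply le_INR in Hn.
    assert (0 < / eps) by (apply Rinv_0_lt_compat; apply cond_pos).
    rewrite <- (Rinv_inv eps). apply Rinv_lt_contravar; [nra|lra].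
  - rewrite Rplus_0_l. apply Rinv_0_lt_compat. pose proof (pos_INR n); lra.
Qed.

Lemma Derive_right (f : R -> R) x l :
  filterlim (fun h => (f (x + h) - f x) / h) (at_right 0) (locally l) -> Derive f x = l.
Proof.
  intros H. unfold Derive, Lim.
  assert (Hs : is_lim_seq (fun n => (f (x + Rbar_loc_seq 0 n) - f x) / Rbar_loc_seq 0 n) l).
  { unfold is_lim_seq. simpl.
    apply (filterlim_comp _ _ _ (fun n : nat => 0 + / (INR n + 1)) (fun h => (f (x + h) - f x) / h)
             eventually (at_right 0) (locally l) seq_at_right H). }
  rewrite (is_lim_seq_unique _ _ Hs). reflexivity.
Qed.

Definition dq (phi : R -> R) (y h : R) := (phi (y + h) - phi y) / h.

Lemma phi_nonneg phi y : phi_ok phi -> 0 <= y -> 0 <= phi y.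
Proof.
  intros Hphi Hy. pose proof Hphi as [H0 [Hm _]].
  specialize (Hm 0 y ltac:(lra)). lra.
Qed.

Lemma dq_bounds phi y h : phi_ok phi -> 0 <= y -> 0 < h -> 0 <= dq phi y h <= 1.
Proof.
  intros Hphi Hy Hh. pose proof Hphi as [_ [Hm _]].
  specialize (Hm y (y + h) ltac:(lra)). unfold dq.
  split.
  - apply Rmult_le_pos; [lra|left; apply Rinv_0_lt_compat; lra].
  - apply Rmult_le_reg_r with h; [lra|]. unfold Rdiv. rewrite Rmult_assoc, Rinv_l by lra. lra.
Qed.

Lemma slope_concave phi x y z : phi_ok phi -> 0 < x -> x < y -> y < z ->
  (phi z - phi y) / (z - y) <= (phi y - phi x) / (y - x).
Proof.
  intros Hphi Hx Hxy Hyz. assert (H := phi_concave phi x y z Hphi Hx Hxy Hyz).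
  apply Rmult_le_reg_r with ((z - y) * (y - x)); [nra|].
  replace ((phi z - phi y) / (z - y) * ((z - y) * (y - x))) with ((phi z - phi y) * (y - x)) by (field; lra).
  replace ((phi y - phi x) / (y - x) * ((z - y) * (y - x))) with ((phi y - phi x) * (z - y)) by (field; lra).
  exact H.
Qed.

Lemma dq_decr phi y h1 h2 : phi_ok phi -> 0 < y -> 0 < h1 -> h1 <= h2 -> dq phi y h2 <= dq phi y h1.
Proof.
  intros Hphi Hy Hh1 Hh12. destruct (Req_dec h1 h2) as [->|Hne]; [lra|].
  assert (H := slope_concave phi y (y + h1) (y + h2) Hphi Hy ltac:(lra) ltac:(lra)).
  unfold dq.
  (* dq y h2 is a convex combination *)
  set (a := phi (y + h1) - phi y). set (b := phi (y + h2) - phi (y + h1)).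
  replace (phi (y + h2) - phi y) with (a + b) by (unfold a, b; ring).
  replace (y + h2 - (y + h1)) with (h2 - h1) in H by ring.
  replace (y + h1 - y) with h1 in H by ring. fold a b in H.
  apply Rmult_le_reg_r with (h1 * h2); [nra|].
  replace ((a + b) / h2 * (h1 * h2)) with ((a + b) * h1) by (field; lra).
  replace (a / h1 * (h1 * h2)) with (a * h2) by (field; lra).
  apply Rmult_le_compat_r with (r := (h2 - h1) * h1) in H; [|nra].
  replace (b / (h2 - h1) * ((h2 - h1) * h1)) with (b * h1) in H by (field; lra).
  replace (a / h1 * ((h2 - h1) * h1)) with (a * (h2 - h1)) in H by (field; lra).
  lra.
Qed.

Definition G (phi : R -> R) (y : R) : R := Derive phi y.

Lemma rd_exists phi y : phi_ok phi -> 0 < y ->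
  exists l, filterlim (dq phi y) (at_right 0) (locally l) /\ (forall h, 0 < h -> dq phi y h <= l).
Proof.
  intros Hphi Hy.
  set (E := fun v => exists h, 0 < h /\ v = dq phi y h).
  assert (HB : bound E) by (exists 1; intros v [h [Hh ->]]; apply (dq_bounds phi y h Hphi); lra).
  assert (HE : exists v, E v) by (exists (dq phi y 1); exists 1; split; [lra|auto]).
  destruct (completeness E HB HE) as [l [Hub Hlub]].
  assert (Hle : forall h, 0 < h -> dq phi y h <= l) by (intros h Hh; apply Hub; exists h; auto).
  exists l; split; auto.
  intros P [eps HP].
  destruct (classic (exists h0, 0 < h0 /\ l - eps < dq phi y h0)) as [[h0 [Hh0 Hl0]]|Hn].
  - exists (mkposreal h0 Hh0). intros h Hb Hh. apply HP. change (Rabs (dq phi y h - l) < eps).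
    assert (Hb' : Rabs (h - 0) < h0) by exact Hb.
    rewrite Rminus_0_r, Rabs_right in Hb' by lra.
    assert (dq phi y h0 <= dq phi y h) by (apply dq_decr; [auto|lra|lra|lra]).
    assert (dq phi y h <= l) by (apply Hle; lra).
    apply Rabs_def1; pose proof (cond_pos eps); lra.
  - exfalso. assert (l <= l - eps); [|pose proof (cond_pos eps); lra].
    apply Hlub. intros v [h [Hh ->]].
    destruct (Rle_dec (dq phi y h) (l - eps)) as [?|Hn2]; auto.
    exfalso; apply Hn; exists h; split; [auto|lra].
Qed.

Lemma G_spec phi y : phi_ok phi -> 0 < y ->
  filterlim (dq phi y) (at_right 0) (locally (G phi y)) /\ (forall h, 0 < h -> dq phi y h <= G phi y).
Proof.
  intros Hphi Hy. destruct (rd_exists phi y Hphi Hy) as [l [H1 H2]].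
  assert (HG : G phi y = l) by (apply Derive_right; exact H1).
  rewrite HG; auto.
Qed.

Lemma lim_le_right (f : R -> R) l c :
  filterlim f (at_right 0) (locally l) -> (forall h, 0 < h -> f h <= c) -> l <= c.
Proof.
  intros Hl Hc. destruct (Rle_dec l c) as [?|Hn]; auto. exfalso.
  assert (He : 0 < l - c) by lra.
  destruct (Hl (fun v => c < v)) as [d Hd].
  - exists (mkposreal _ He). intros v Hv. change (Rabs (v - l) < l - c) in Hv.
    apply Rabs_def2 in Hv. lra.
  - assert (Hh : 0 < d / 2) by (pose proof (cond_pos d); lra).
    specialize (Hd (d / 2)). assert (c < f (d / 2)); [apply Hd|].
    + change (Rabs (d / 2 - 0) < d). rewrite Rminus_0_r, Rabs_right by lra. pose proof (cond_pos d); lra.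
    + lra.
    + specialize (Hc (d / 2) Hh). lra.
Qed.

Lemma G_le_slope phi x y : phi_ok phi -> 0 < x -> x < y -> G phi y <= (phi y - phi x) / (y - x).
Proof.
  intros Hphi Hx Hxy. destruct (G_spec phi y Hphi ltac:(lra)) as [H1 _].
  apply (lim_le_right _ _ _ H1). intros h Hh. unfold dq.
  assert (H := slope_concave phi x y (y + h) Hphi Hx Hxy ltac:(lra)).
  replace (y + h - y) with h in H by ring. exact H.
Qed.

Lemma G_ge_dq phi y h : phi_ok phi -> 0 < y -> 0 < h -> dq phi y h <= G phi y.
Proof. intros Hphi Hy Hh. destruct (G_spec phi y Hphi Hy) as [_ H]. auto. Qed.

Lemma G_bounds phi y : phi_ok phi -> 0 < y -> 0 <= G phi y <= 1.
Proof.
  intros Hphi Hy. destruct (G_spec phi y Hphi Hy) as [H1 H2]. split.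
  - apply Rle_trans with (dq phi y 1); [apply dq_bounds; [auto|lra|lra]|apply H2; lra].
  - apply (lim_le_right _ _ _ H1). intros h Hh. apply dq_bounds; [auto|lra|lra].
Qed.

Lemma G_decr phi x y : phi_ok phi -> 0 < x -> x <= y -> G phi y <= G phi x.
Proof.
  intros Hphi Hx Hxy. destruct (Req_dec x y) as [->|Hne]; [lra|].
  apply Rle_trans with ((phi y - phi x) / (y - x)); [apply G_le_slope; [auto|lra|lra]|].
  replace ((phi y - phi x) / (y - x)) with (dq phi x (y - x)) by (unfold dq; replace (x + (y - x)) with y by ring; reflexivity).
  apply G_ge_dq; [auto|lra|lra].
Qed.

Lemma G_mul_le phi y : phi_ok phi -> 0 < y -> y * G phi y <= phi y.
Proof.
  intros Hphi Hy. pose proof Hphi as [H0 [Hm _]].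
  destruct (G_bounds phi y Hphi Hy) as [Hg0 Hg1].
  apply le_epsilon. intros eps Heps.
  set (x := Rmin (y / 2) eps).
  assert (Hx : 0 < x) by (apply Rmin_pos; lra).
  assert (Hxy : x < y) by (pose proof (Rmin_l (y / 2) eps); fold x in H; lra).
  assert (Hxe : x <= eps) by apply Rmin_r.
  assert (H := G_le_slope phi x y Hphi Hx Hxy).
  apply Rmult_le_compat_r with (r := y - x) in H; [|lra].
  replace ((phi y - phi x) / (y - x) * (y - x)) with (phi y - phi x) in H by (field; lra).
  assert (0 <= phi x) by (apply phi_nonneg; [auto|lra]).
  nra.
Qed.

Lemma G_le_inv phi y : phi_ok phi -> 0 < y -> G phi y <= / y.
Proof.
  intros Hphi Hy. pose proof Hphi as [_ [_ [H1 _]]].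
  assert (H := G_mul_le phi y Hphi Hy). specialize (H1 y ltac:(lra)).
  apply Rmult_le_reg_l with y; [lra|]. rewrite Rinv_r by lra. lra.
Qed.


Lemma cont_of_eps (f : R -> R) x :
  (forall eps, 0 < eps -> exists d, 0 < d /\ forall y, Rabs (y - x) < d -> Rabs (f y - f x) < eps) ->
  continuity_pt f x.
Proof.
  intros H eps Heps. destruct (H eps Heps) as [d [Hd Hy]].
  exists d; split; [lra|]. intros y [_ Hyd]. simpl in *. unfold R_dist in *. apply Hy; auto.
Qed.

Definition diffble (phi : R -> R) := forall y, 0 < y -> ex_derive phi y.

Lemma G_is_derive phi y : diffble phi -> 0 < y -> is_derive phi y (G phi y).
Proof. intros Hd Hy. apply Derive_correct. auto. Qed.

Lemma G_cont phi y : phi_ok phi -> diffble phi -> 0 < y ->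
  forall eps, 0 < eps -> exists d, 0 < d /\ forall y', Rabs (y' - y) < d -> Rabs (G phi y' - G phi y) < eps.
Proof.
  intros Hphi Hd Hy eps Heps.
  pose proof Hphi as [H0 [Hm [H1 _]]].
  destruct (G_spec phi y Hphi Hy) as [Hlim _].
  destruct (Hlim (fun v => Rabs (v - G phi y) < eps / 2)) as [d1 Hd1].
  { exists (mkposreal (eps/2) ltac:(lra)). intros v Hv. exact Hv. }
  set (h0 := Rmin (d1 / 2) (y / 2)).
  assert (Hh0 : 0 < h0) by (apply Rmin_pos; pose proof (cond_pos d1); lra).
  assert (Hh0d : h0 < d1) by (pose proof (Rmin_l (d1/2) (y/2)); pose proof (cond_pos d1); fold h0 in H; lra).
  assert (Hq : Rabs (dq phi y h0 - G phi y) < eps / 2).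
  { apply Hd1; [change (Rabs (h0 - 0) < d1); rewrite Rminus_0_r, Rabs_right; lra|lra]. }
  assert (Hder := G_is_derive phi y Hd Hy).
  apply is_derive_Reals in Hder.
  destruct (Hder (eps / 2) ltac:(lra)) as [d2 Hd2].
  set (k0 := Rmin (d2 / 2) (y / 2)).
  assert (Hk0 : 0 < k0) by (apply Rmin_pos; pose proof (cond_pos d2); lra).
  assert (Hk0y : k0 <= y / 2) by apply Rmin_r.
  assert (Hk0d : k0 < d2) by (pose proof (Rmin_l (d2/2) (y/2)); pose proof (cond_pos d2); fold k0 in H; lra).
  assert (Hql := Hd2 (- k0) ltac:(lra) ltac:(rewrite Rabs_Ropp, Rabs_right; lra)).
  replace (y + - k0) with (y - k0) in Hql by ring.
  replace ((phi (y - k0) - phi y) / - k0) with ((phi y - phi (y - k0)) / k0) in Hql by (field; lra).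
  set (ql := (phi y - phi (y - k0)) / k0) in *.
  assert (Hql1 : ql <= 1).
  { unfold ql. specialize (Hm (y - k0) y ltac:(lra)).
    apply Rmult_le_reg_r with k0; [lra|]. unfold Rdiv. rewrite Rmult_assoc, Rinv_l by lra. lra. }
  set (d := Rmin (Rmin (eps * h0 / 2) (h0 / 2)) (Rmin (eps * k0 / 4) (k0 / 2))).
  assert (Hdpos : 0 < d).
  { unfold d. repeat apply Rmin_pos; try nra. }
  assert (Hd_1 : d <= eps * h0 / 2) by (unfold d; pose proof (Rmin_l (Rmin (eps * h0 / 2) (h0 / 2)) (Rmin (eps * k0 / 4) (k0 / 2))); pose proof (Rmin_l (eps * h0 / 2) (h0 / 2)); lra).
  assert (Hd_2 : d <= h0 / 2) by (unfold d; pose proof (Rmin_l (Rmin (eps * h0 / 2) (h0 / 2)) (Rmin (eps * k0 / 4) (k0 / 2))); pose proof (Rmin_r (eps * h0 / 2) (h0 / 2)); lra).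
  assert (Hd_3 : d <= eps * k0 / 4) by (unfold d; pose proof (Rmin_r (Rmin (eps * h0 / 2) (h0 / 2)) (Rmin (eps * k0 / 4) (k0 / 2))); pose proof (Rmin_l (eps * k0 / 4) (k0 / 2)); lra).
  assert (Hd_4 : d <= k0 / 2) by (unfold d; pose proof (Rmin_r (Rmin (eps * h0 / 2) (h0 / 2)) (Rmin (eps * k0 / 4) (k0 / 2))); pose proof (Rmin_r (eps * k0 / 4) (k0 / 2)); lra).
  exists d; split; auto.
  intros y' Hy'. apply Rabs_def2 in Hy'. destruct Hy' as [Hy'1 Hy'2].
  destruct (Rle_dec y y') as [Hle|Hlt].
  -
    assert (Hg1 : G phi y' <= G phi y) by (apply G_decr; [auto|lra|lra]).
    destruct (Req_dec y y') as [<-|Hne]; [rewrite Rminus_diag, Rabs_R0; lra|].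
    set (a := y' - y).
    assert (Hg2 : dq phi y' (y + h0 - y') <= G phi y') by (apply G_ge_dq; [auto|lra|lra]).
    unfold dq in Hg2. replace (y' + (y + h0 - y')) with (y + h0) in Hg2 by ring.
    assert (Hn : 0 <= phi (y + h0) - phi y') by (apply Hm; lra).
    assert (Hphy : phi y' - phi y <= a) by (unfold a; specialize (Hm y y' ltac:(lra)); lra).
    assert (Hlow : dq phi y h0 - a / h0 <= (phi (y + h0) - phi y') / (y + h0 - y')).
    { unfold dq. apply Rle_trans with ((phi (y + h0) - phi y') / h0).
      - replace (y + h0 - y) with h0 by ring.
        unfold Rdiv. rewrite <- Rmult_minus_distr_r. apply Rmult_le_compat_r; [left; apply Rinv_0_lt_compat; lra|lra].
      - unfold Rdiv. apply Rmult_le_compat_l; [lra|]. apply Rinv_le_contravar; lra. }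
    assert (Hah : a / h0 <= eps / 2).
    { apply Rmult_le_reg_r with h0; [lra|]. unfold Rdiv. rewrite Rmult_assoc, Rinv_l by lra. unfold a. lra. }
    apply Rabs_def2 in Hq. apply Rabs_def1; lra.
  -
    assert (Hg1 : G phi y <= G phi y') by (apply G_decr; [auto|lra|lra]).
    set (a := y - y').
    assert (Hg2 : G phi y' <= (phi y' - phi (y - k0)) / (y' - (y - k0))) by (apply G_le_slope; [auto|lra|lra]).
    assert (Hphy : phi y' <= phi y) by (specialize (Hm y' y ltac:(lra)); lra).
    assert (Hn : 0 <= phi y' - phi (y - k0)) by (apply Hm; lra).
    assert (Hup : (phi y' - phi (y - k0)) / (y' - (y - k0)) <= ql * k0 / (k0 - a)).
    { unfold ql. replace ((phi y - phi (y - k0)) / k0 * k0) with (phi y - phi (y - k0)) by (field; lra).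
      replace (y' - (y - k0)) with (k0 - a) by (unfold a; ring).
      unfold Rdiv. apply Rmult_le_compat_r; [left; apply Rinv_0_lt_compat; unfold a; lra|lra]. }
    assert (Hql0 : 0 <= ql).
    { unfold ql. specialize (Hm (y - k0) y ltac:(lra)). apply Rmult_le_pos; [lra|left; apply Rinv_0_lt_compat; lra]. }
    assert (Hk : ql * k0 / (k0 - a) <= ql + eps / 2).
    { assert (Ha : a <= eps * k0 / 4) by (unfold a; lra).
      assert (Ha2 : a <= k0 / 2) by (unfold a; lra).
      apply Rmult_le_reg_r with (k0 - a); [lra|].
      replace (ql * k0 / (k0 - a) * (k0 - a)) with (ql * k0) by (field; lra).
      assert (0 <= a) by (unfold a; lra).
      assert (ql * a <= a) by nra.
      assert (a <= eps / 2 * (k0 - a)) by nra.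
      nra. }
    apply Rabs_def2 in Hql. apply Rabs_def1; lra.
Qed.

Lemma G_continuity_pt phi y : phi_ok phi -> diffble phi -> 0 < y -> continuity_pt (G phi) y.
Proof.
  intros Hphi Hd Hy. apply cont_of_eps. intros eps Heps.
  destruct (G_cont phi y Hphi Hd Hy eps Heps) as [d [Hd0 Hd1]]. exists d; auto.
Qed.

Lemma phi_sup phi : phi_ok phi ->
  exists S, (forall y, 0 <= y -> phi y <= S) /\
    forall eps, 0 < eps -> exists A, 0 < A /\ forall y, A <= y -> S - eps < phi y.
Proof.
  intros Hphi. pose proof Hphi as [H0 [Hm [H1 _]]].
  set (E := fun v => exists y, 0 <= y /\ v = phi y).
  assert (HB : bound E) by (exists 1; intros v [y [Hy ->]]; apply H1; auto).
  assert (HE : exists v, E v) by (exists (phi 0); exists 0; split; [lra|auto]).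
  destruct (completeness E HB HE) as [S [Hub Hlub]].
  exists S; split.
  - intros y Hy. apply Hub. exists y; auto.
  - intros eps Heps.
    destruct (classic (exists y0, 0 <= y0 /\ S - eps < phi y0)) as [[y0 [Hy0 Hl0]]|Hn].
    + exists (y0 + 1). split; [lra|]. intros y Hy.
      specialize (Hm y0 y ltac:(lra)). lra.
    + exfalso. assert (S <= S - eps); [|lra].
      apply Hlub. intros v [y [Hy ->]].
      destruct (Rle_dec (phi y) (S - eps)) as [?|Hn2]; auto.
      exfalso; apply Hn; exists y; split; [auto|lra].
Qed.

Lemma lemma_U phi : phi_ok phi -> diffble phi ->
  forall eps, 0 < eps -> exists del, 0 < del <= 1/2 /\
    forall z l, 0 < z -> Rabs (l - 1) < del ->
      Rabs (l * z * G phi (l * z) - z * G phi z) <= eps.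
Proof.
  intros Hphi Hd eps Heps.
  pose proof Hphi as [H0 [Hm [H1 _]]].
  set (a := eps / 4).
  destruct (phi_sup phi Hphi) as [S [HS HSe]].
  destruct (HSe (eps / 4) ltac:(lra)) as [A0 [HA0 HA0s]].
  set (A := Rmax A0 a).
  assert (HA : 0 < A) by (unfold A; pose proof (Rmax_l A0 a); lra).
  assert (HAa : a <= A) by apply Rmax_r.
  assert (HAA0 : A0 <= A) by apply Rmax_l.
  assert (Hunif := Heine (G phi) (fun c => a / 2 <= c <= 6 * A) (compact_P3 (a/2) (6 * A))
                     ltac:(intros x Hx; apply G_continuity_pt; [auto|auto|unfold a in Hx; lra])).
  destruct (Hunif (mkposreal (eps / (8 * A)) ltac:(apply Rdiv_lt_0_compat; lra))) as [du Hdu].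
  simpl in Hdu.
  set (del := Rmin (1/2) (Rmin (du / (4 * A)) (eps / (8 * A)))).
  assert (Hdel0 : 0 < del).
  { unfold del. repeat apply Rmin_pos; try lra; apply Rdiv_lt_0_compat; try lra. apply cond_pos. }
  assert (Hdel1 : del <= 1/2) by apply Rmin_l.
  assert (Hdel2 : del <= du / (4 * A)) by (unfold del; pose proof (Rmin_r (1/2) (Rmin (du / (4 * A)) (eps / (8 * A)))); pose proof (Rmin_l (du / (4 * A)) (eps / (8 * A))); lra).
  assert (Hdel3 : del <= eps / (8 * A)) by (unfold del; pose proof (Rmin_r (1/2) (Rmin (du / (4 * A)) (eps / (8 * A)))); pose proof (Rmin_r (du / (4 * A)) (eps / (8 * A))); lra).
  exists del; split; [lra|].
  intros z l Hz Hl.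
  apply Rabs_def2 in Hl. destruct Hl as [Hl1 Hl2].
  set (w := l * z).
  assert (Hw : 0 < w) by (unfold w; nra).
  assert (Hwz1 : z / 2 <= w) by (unfold w; nra).
  assert (Hwz2 : w <= 3 * z / 2) by (unfold w; nra).
  destruct (G_bounds phi z Hphi Hz) as [Gz0 Gz1].
  destruct (G_bounds phi w Hphi Hw) as [Gw0 Gw1].
  assert (Hzg := G_mul_le phi z Hphi Hz).
  assert (Hwg := G_mul_le phi w Hphi Hw).
  destruct (Rle_dec z a) as [Hza|Hza].
  - assert (0 <= z * G phi z <= z) by (split; nra).
    assert (0 <= w * G phi w <= w) by (split; nra).
    apply Rabs_le; unfold a in *; lra.
  - destruct (Rle_dec (4 * A) z) as [HzA|HzA].
    + assert (Hzs : z * G phi z <= eps / 2).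
      { assert (Hsl := G_le_slope phi (z / 2) z Hphi ltac:(lra) ltac:(lra)).
        apply Rmult_le_compat_l with (r := z) in Hsl; [|lra].
        replace (z * ((phi z - phi (z / 2)) / (z - z / 2))) with (2 * (phi z - phi (z / 2))) in Hsl by (field; lra).
        assert (HSz := HS z ltac:(lra)).
        assert (HSz2 := HA0s (z / 2) ltac:(lra)). lra. }
      assert (Hws : w * G phi w <= eps / 2).
      { assert (Hsl := G_le_slope phi (w / 2) w Hphi ltac:(lra) ltac:(lra)).
        apply Rmult_le_compat_l with (r := w) in Hsl; [|lra].
        replace (w * ((phi w - phi (w / 2)) / (w - w / 2))) with (2 * (phi w - phi (w / 2))) in Hsl by (field; lra).
        assert (HSz := HS w ltac:(lra)).
        assert (HSz2 := HA0s (w / 2) ltac:(lra)). lra. }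
      assert (0 <= z * G phi z) by nra. assert (0 <= w * G phi w) by nra.
      apply Rabs_le; lra.
    + assert (Hwzd : Rabs (w - z) < du).
      { unfold w. replace (l * z - z) with ((l - 1) * z) by ring.
        rewrite Rabs_mult, (Rabs_right z) by lra.
        assert (Hl' : Rabs (l - 1) < del) by (apply Rabs_def1; lra).
        apply Rlt_le_trans with (del * z); [apply Rmult_lt_compat_r; lra|].
        apply Rmult_le_compat_r with (r := 4 * A) in Hdel2; [|lra].
        replace (du / (4 * A) * (4 * A)) with (pos du) in Hdel2 by (field; lra).
        nra. }
      assert (HG := Hdu w z ltac:(unfold a in *; lra) ltac:(unfold a in *; lra)).
      assert (Hwz : Rabs (w - z) <= eps / 2).
      { unfold w. replace (l * z - z) with ((l - 1) * z) by ring.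
        rewrite Rabs_mult, (Rabs_right z) by lra.
        assert (Hl' : Rabs (l - 1) <= del) by (apply Rabs_le; lra).
        apply Rmult_le_compat_r with (r := 4 * A) in Hdel3; [|lra].
        replace (eps / (8 * A) * (4 * A)) with (eps / 2) in Hdel3 by (field; lra).
        assert (0 <= Rabs (l - 1)) by apply Rabs_pos. nra. }
      replace (w * G phi w - z * G phi z) with ((w - z) * G phi w + z * (G phi w - G phi z)) by ring.
      apply Rle_trans with (Rabs ((w - z) * G phi w) + Rabs (z * (G phi w - G phi z))); [apply Rabs_triang|].
      rewrite !Rabs_mult, (Rabs_right (G phi w)), (Rabs_right z) by lra.
      assert (Rabs (w - z) * G phi w <= eps / 2).
      { assert (0 <= Rabs (w - z)) by apply Rabs_pos. nra. }
      assert (z * Rabs (G phi w - G phi z) <= eps / 2).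
      { apply Rle_trans with (4 * A * (eps / (8 * A))).
        - apply Rmult_le_compat; try lra; try apply Rabs_pos.
        - right; field; lra. }
      lra.
Qed.

Lemma phi_mult_lip phi z l : phi_ok phi -> 0 < z -> 1/2 <= l <= 3/2 ->
  Rabs (phi (l * z) - phi z) <= 2 * Rabs (l - 1).
Proof.
  intros Hphi Hz Hl. pose proof Hphi as [H0 [Hm [H1 _]]].
  destruct (Rle_dec 1 l) as [Hl1|Hl1].
  - destruct (Req_dec l 1) as [->|Hne]; [rewrite Rmult_1_l; unfold Rminus; rewrite !Rplus_opp_r, Rabs_R0; lra|].
    assert (Hdq := G_ge_dq phi z ((l - 1) * z) Hphi Hz ltac:(nra)).
    unfold dq in Hdq. replace (z + (l - 1) * z) with (l * z) in Hdq by ring.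
    assert (Hzg := G_mul_le phi z Hphi Hz). assert (H1z := H1 z ltac:(lra)).
    assert (Hmm := Hm z (l * z) ltac:(nra)).
    apply Rmult_le_compat_r with (r := (l - 1) * z) in Hdq; [|nra].
    replace ((phi (l * z) - phi z) / ((l - 1) * z) * ((l - 1) * z)) with (phi (l * z) - phi z) in Hdq by (field; nra).
    rewrite (Rabs_right (phi (l * z) - phi z)) by lra. rewrite (Rabs_right (l - 1)) by lra.
    assert (0 <= G phi z) by (apply G_bounds; auto).
    nra.
  - assert (Hlz : 0 < l * z) by nra.
    assert (Hdq := G_ge_dq phi (l * z) ((1 - l) * z) Hphi Hlz ltac:(nra)).
    unfold dq in Hdq. replace (l * z + (1 - l) * z) with z in Hdq by ring.
    assert (Hzg := G_mul_le phi (l * z) Hphi Hlz). assert (H1z := H1 (l * z) ltac:(lra)).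
    assert (Hmm := Hm (l * z) z ltac:(nra)).
    apply Rmult_le_compat_r with (r := (1 - l) * z) in Hdq; [|nra].
    replace ((phi z - phi (l * z)) / ((1 - l) * z) * ((1 - l) * z)) with (phi z - phi (l * z)) in Hdq by (field; nra).
    rewrite Rabs_minus_sym, (Rabs_right (phi z - phi (l * z))) by lra. rewrite Rabs_left1 by lra.
    assert (Hg0 : 0 <= G phi (l * z)) by (apply G_bounds; auto).
    (* (1-l) z G(lz) = (1-l)/l * (l z G(lz)) <= (1-l)/l <= 2(1-l) *)
    assert (Hk : (1 - l) * z * G phi (l * z) <= 2 * (1 - l)).
    { assert (HzG : z * G phi (l * z) <= 2).
      { apply Rmult_le_reg_l with l; [lra|]. nra. }
      nra. }
    lra.
Qed.

Lemma small_zero (D K x0 : R) : 0 < x0 ->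
  (forall e, 0 < e < x0 -> Rabs D <= e * K) -> D = 0.
Proof.
  intros Hx0 H. destruct (Req_dec D 0) as [?|Hne]; auto. exfalso.
  assert (HD : 0 < Rabs D) by (apply Rabs_pos_lt; auto).
  assert (HK : 0 < K).
  { destruct (Rle_dec K 0) as [Hk|Hk]; [|lra]. specialize (H (x0/2) ltac:(lra)). nra. }
  set (e := Rmin (x0 / 2) (Rabs D / (2 * K))).
  assert (He : 0 < e) by (apply Rmin_pos; [lra|apply Rdiv_lt_0_compat; lra]).
  assert (He1 : e <= x0 / 2) by apply Rmin_l.
  assert (He2 : e <= Rabs D / (2 * K)) by apply Rmin_r.
  specialize (H e ltac:(lra)).
  apply Rmult_le_compat_r with (r := K) in He2; [|lra].
  replace (Rabs D / (2 * K) * K) with (Rabs D / 2) in He2 by (field; lra). lra.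
Qed.

Lemma G_rs_decr phi r : phi_ok phi -> 0 < r ->
  forall x y, 0 < x -> x <= y -> G phi (r * y) <= G phi (r * x).
Proof. intros Hphi Hr x y Hx Hxy. apply G_decr; [auto|nra|nra]. Qed.

Lemma ex_RInt_G phi r x : phi_ok phi -> 0 < r -> 0 <= x -> ex_RInt (fun s => G phi (r * s)) 0 x.
Proof.
  intros Hphi Hr Hx. apply ex_RInt_decr_oc with 1; [lra| |].
  - intros u v Hu Huv Hv. apply G_rs_decr; auto; lra.
  - intros u Hu. apply G_bounds; [auto|nra].
Qed.

Lemma FTC0 phi r x : phi_ok phi -> diffble phi -> 0 < r -> 0 <= x ->
  is_RInt (fun s => G phi (r * s)) 0 x (phi (r * x) / r).
Proof.
  intros Hphi Hd Hr Hx. pose proof Hphi as [H0 [Hm [H1 _]]].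
  assert (Hex := ex_RInt_G phi r x Hphi Hr Hx).
  destruct (Req_dec x 0) as [->|Hx0].
  { rewrite Rmult_0_r, H0. replace (0 / r) with 0 by (field; lra).
    assert (Hp : is_RInt (fun s => G phi (r * s)) 0 0 (RInt (fun s => G phi (r * s)) 0 0)) by (apply Rcorrect; auto).
    rewrite RInt_point in Hp. exact Hp. }
  assert (Hxp : 0 < x) by lra.
  replace (phi (r * x) / r) with (RInt (fun s => G phi (r * s)) 0 x); [apply Rcorrect; auto|].
  set (C := Rabs (G phi 0) + 1).
  assert (HC : 0 < C) by (unfold C; pose proof (Rabs_pos (G phi 0)); lra).
  apply Rminus_diag_uniq.
  apply (small_zero _ (C + 1) x Hxp). intros e He.
  assert (Hex1 : ex_RInt (fun s => G phi (r * s)) 0 e) by (apply ex_RInt_G; auto; lra).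
  assert (Hex2 : ex_RInt (fun s => G phi (r * s)) e x) by (apply Rchasles2 with 0; [lra|auto]).
  assert (Hch := RChasles _ 0 e x _ _ (Rcorrect _ _ _ Hex1) (Rcorrect _ _ _ Hex2)).
  rewrite (Runique _ _ _ _ Hch).
  assert (Hftc : is_RInt (fun s => G phi (r * s)) e x (phi (r * x) / r - phi (r * e) / r)).
  { apply (is_RInt_derive (fun s => phi (r * s) / r) (fun s => G phi (r * s)) e x).
    - intros s Hs. rewrite Rmin_left in Hs by lra. rewrite Rmax_right in Hs by lra.
      unfold G. auto_derive.
      + apply Hd. nra.
      + change (fun x0 => phi x0) with phi. field. lra.
    - intros s Hs. rewrite Rmin_left in Hs by lra. rewrite Rmax_right in Hs by lra.
      apply (filterlim_comp _ _ _ (fun s => r * s) (G phi) (locally s) (locally (r * s))).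
      + apply (ex_derive_continuous (fun s => r * s)). auto_derive. auto.
      + apply continuity_pt_filterlim. apply G_continuity_pt; [auto|auto|nra]. }
  rewrite (Runique _ _ _ _ Hftc).
  assert (Hb : Rabs (RInt (fun s => G phi (r * s)) 0 e) <= (e - 0) * C).
  { apply abs_RInt_le_const; [lra|auto|]. intros t Ht.
    destruct (Req_dec t 0) as [->|Ht0].
    - rewrite Rmult_0_r. unfold C; lra.
    - destruct (G_bounds phi (r * t) Hphi ltac:(nra)) as [Ha Hb].
      rewrite Rabs_right by lra. unfold C. pose proof (Rabs_pos (G phi 0)); lra. }
  assert (Hpe : 0 <= phi (r * e) / r <= e).
  { assert (Hme := Hm 0 (r * e) ltac:(nra)). rewrite H0 in Hme.
    split; [apply Rmult_le_pos; [lra|left; apply Rinv_0_lt_compat; lra]|].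
    apply Rmult_le_reg_r with r; [lra|]. unfold Rdiv. rewrite Rmult_assoc, Rinv_l by lra. lra. }
  replace (RInt (fun s => G phi (r * s)) 0 e + (phi (r * x) / r - phi (r * e) / r) - phi (r * x) / r)
    with (RInt (fun s => G phi (r * s)) 0 e - phi (r * e) / r) by ring.
  apply Rle_trans with (Rabs (RInt (fun s => G phi (r * s)) 0 e) + Rabs (phi (r * e) / r)).
  { unfold Rminus. rewrite <- (Rabs_Ropp (phi (r * e) / r)). apply Rabs_triang. }
  rewrite (Rabs_right (phi (r * e) / r)) by lra. nra.
Qed.


Definition kk (phi : R -> R) (c x : R) := (c * x * G phi (c * x) - phi (c * x)) / (c * c).

Lemma kk_cont_unif phi r0 : phi_ok phi -> diffble phi -> 0 < r0 ->
  forall eps, 0 < eps -> exists del, 0 < del <= r0 / 2 /\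
    forall c x, Rabs (c - r0) < del -> 0 < x -> Rabs (kk phi c x - kk phi r0 x) <= eps.
Proof.
  intros Hphi Hd Hr0 eps Heps.
  destruct (lemma_U phi Hphi Hd (eps * (r0 * r0) / 8) ltac:(apply Rdiv_lt_0_compat; [apply Rmult_lt_0_compat; [lra|apply Rmult_lt_0_compat; lra]|lra])) as [dU [[HdU0 HdU1] HU]].
  set (del := Rmin (r0 / 2) (Rmin (r0 * dU) (eps * (r0 * r0 * r0) / 40))).
  assert (Hr3 : 0 < r0 * r0 * r0) by (apply Rmult_lt_0_compat; nra).
  assert (Hdel0 : 0 < del).
  { unfold del. apply Rmin_pos; [lra|]. apply Rmin_pos; [nra|]. apply Rdiv_lt_0_compat; nra. }
  assert (Hdel1 : del <= r0 / 2) by apply Rmin_l.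
  assert (Hdel2 : del <= r0 * dU) by (unfold del; pose proof (Rmin_r (r0 / 2) (Rmin (r0 * dU) (eps * (r0 * r0 * r0) / 40))); pose proof (Rmin_l (r0 * dU) (eps * (r0 * r0 * r0) / 40)); lra).
  assert (Hdel3 : del <= eps * (r0 * r0 * r0) / 40) by (unfold del; pose proof (Rmin_r (r0 / 2) (Rmin (r0 * dU) (eps * (r0 * r0 * r0) / 40))); pose proof (Rmin_r (r0 * dU) (eps * (r0 * r0 * r0) / 40)); lra).
  exists del; split; [lra|].
  intros c x Hc Hx.
  apply Rabs_def2 in Hc as Hc'. destruct Hc' as [Hc1 Hc2].
  assert (Hcp : r0 / 2 < c) by lra.
  set (z := r0 * x). set (l := c / r0).
  assert (Hz : 0 < z) by (unfold z; nra).
  assert (Hlz : c * x = l * z) by (unfold l, z; field; lra).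
  assert (Hl1 : Rabs (l - 1) = Rabs (c - r0) / r0).
  { unfold l. replace (c / r0 - 1) with ((c - r0) / r0) by (field; lra).
    unfold Rdiv. rewrite Rabs_mult, (Rabs_right (/ r0)) by (left; apply Rinv_0_lt_compat; lra). auto. }
  assert (Hl1d : Rabs (l - 1) < dU).
  { rewrite Hl1. apply Rmult_lt_reg_r with r0; [lra|].
    unfold Rdiv. rewrite Rmult_assoc, Rinv_l by lra. nra. }
  assert (Hlr : 1/2 <= l <= 3/2).
  { apply Rabs_def2 in Hl1d as [? ?]. lra. }
  assert (HUz := HU z l Hz Hl1d).
  assert (HLz := phi_mult_lip phi z l Hphi Hz Hlr).
  unfold kk. rewrite Hlz. fold z.
  set (u1 := l * z * G phi (l * z)). set (u0 := z * G phi z).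
  set (p1 := phi (l * z)). set (p0 := phi z).
  assert (Hm0 : Rabs (u0 - p0) <= 1).
  { unfold u0, p0. assert (H1 := G_mul_le phi z Hphi Hz). pose proof Hphi as [_ [_ [Hle1 _]]].
    assert (0 <= G phi z) by (apply G_bounds; auto). specialize (Hle1 z ltac:(lra)).
    apply Rabs_le; nra. }
  replace ((u1 - p1) / (c * c) - (u0 - p0) / (r0 * r0))
    with (((u1 - u0) - (p1 - p0)) / (c * c) + (u0 - p0) * ((r0 - c) * (r0 + c) / (c * c * (r0 * r0)))) by (field; lra).
  assert (Hcc : 0 < c * c) by nra.
  assert (Hic : / (c * c) <= 4 / (r0 * r0)).
  { replace (4 / (r0 * r0)) with (/ ((r0 / 2) * (r0 / 2))) by (field; lra).
    apply Rinv_le_contravar; [nra|]. apply Rmult_le_compat; lra. }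
  assert (HA : Rabs (((u1 - u0) - (p1 - p0)) / (c * c)) <= eps / 2 + 8 * Rabs (c - r0) / (r0 * r0 * r0)).
  { unfold Rdiv at 1. rewrite Rabs_mult, (Rabs_right (/ (c * c))) by (left; apply Rinv_0_lt_compat; lra).
    assert (Hn : Rabs ((u1 - u0) - (p1 - p0)) <= eps * (r0 * r0) / 8 + 2 * (Rabs (c - r0) / r0)).
    { rewrite <- Hl1.
      assert (Ht : Rabs ((u1 - u0) - (p1 - p0)) <= Rabs (u1 - u0) + Rabs (p1 - p0)).
      { replace ((u1 - u0) - (p1 - p0)) with ((u1 - u0) + - (p1 - p0)) by ring.
        rewrite <- (Rabs_Ropp (p1 - p0)). apply Rabs_triang. }
      unfold u1, u0, p1, p0 in *. lra. }
    apply Rle_trans with ((eps * (r0 * r0) / 8 + 2 * (Rabs (c - r0) / r0)) * (4 / (r0 * r0))).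
    - apply Rmult_le_compat; try apply Rabs_pos; try lra. left; apply Rinv_0_lt_compat; lra.
    - right. field. lra. }
  assert (HB : Rabs ((u0 - p0) * ((r0 - c) * (r0 + c) / (c * c * (r0 * r0)))) <= 10 * Rabs (c - r0) / (r0 * r0 * r0)).
  { rewrite Rabs_mult. apply Rle_trans with (1 * Rabs ((r0 - c) * (r0 + c) / (c * c * (r0 * r0)))).
    - apply Rmult_le_compat_r; [apply Rabs_pos|auto].
    - rewrite Rmult_1_l. unfold Rdiv. rewrite !Rabs_mult.
      rewrite (Rabs_right (r0 + c)) by lra.
      rewrite (Rabs_right (/ (c * c * (r0 * r0)))) by (left; apply Rinv_0_lt_compat; nra).
      rewrite Rabs_minus_sym.
      replace (/ (c * c * (r0 * r0))) with (/ (c * c) * / (r0 * r0)) by (field; lra).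
      assert (Hrc : r0 + c <= 5 * r0 / 2) by lra.
      assert (0 <= Rabs (c - r0)) by apply Rabs_pos.
      assert (0 < / (r0 * r0)) by (apply Rinv_0_lt_compat; nra).
      apply Rle_trans with (Rabs (c - r0) * (5 * r0 / 2) * (4 / (r0 * r0) * / (r0 * r0))).
      + assert (Hx1 : Rabs (c - r0) * (r0 + c) <= Rabs (c - r0) * (5 * r0 / 2)) by (apply Rmult_le_compat_l; lra).
        assert (Hx2 : / (c * c) * / (r0 * r0) <= 4 / (r0 * r0) * / (r0 * r0)) by (apply Rmult_le_compat_r; lra).
        apply Rmult_le_compat; [nra | | exact Hx1 | exact Hx2].
        apply Rmult_le_pos; left; apply Rinv_0_lt_compat; nra.
      + right. field. lra. }
  assert (Hfin : 18 * Rabs (c - r0) / (r0 * r0 * r0) <= eps / 2).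
  { apply Rmult_le_reg_r with (r0 * r0 * r0); [lra|].
    replace (18 * Rabs (c - r0) / (r0 * r0 * r0) * (r0 * r0 * r0)) with (18 * Rabs (c - r0)) by (field; lra).
    nra. }
  apply Rle_trans with (Rabs (((u1 - u0) - (p1 - p0)) / (c * c)) + Rabs ((u0 - p0) * ((r0 - c) * (r0 + c) / (c * c * (r0 * r0))))); [apply Rabs_triang|].
  assert (8 * Rabs (c - r0) / (r0 * r0 * r0) + 10 * Rabs (c - r0) / (r0 * r0 * r0) = 18 * Rabs (c - r0) / (r0 * r0 * r0)) by (field; lra).
  lra.
Qed.

Definition Eq (phi : R -> R) (r0 r x : R) := (phi (r * x) / r - phi (r0 * x) / r0) / (r - r0).

Lemma E_mvt phi r0 r x : phi_ok phi -> diffble phi -> 0 < r0 -> 0 < r -> r <> r0 -> 0 < x ->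
  exists c, Rmin r0 r <= c <= Rmax r0 r /\ Eq phi r0 r x = kk phi c x.
Proof.
  intros Hphi Hd Hr0 Hr Hne Hx.
  assert (Hmin : 0 < Rmin r0 r) by (apply Rmin_pos; auto).
  destruct (MVT_gen (fun c => phi (c * x) / c) r0 r (fun c => kk phi c x)) as [c [Hc Heq]].
  - intros c Hc. assert (Hcp : 0 < c) by lra.
    unfold kk, G. auto_derive.
    + split; [apply Hd; nra|lra].
    + change (fun x0 => phi x0) with phi. field. lra.
  - intros c Hc. assert (Hcp : 0 < c) by lra.
    apply continuity_pt_filterlim. apply (ex_derive_continuous (fun c => phi (c * x) / c)).
    auto_derive. split; [apply Hd; nra|lra].
  - exists c; split; [auto|]. unfold Eq. rewrite Heq. field. lra.
Qed.

Lemma kk_zero phi c : phi_ok phi -> c <> 0 -> kk phi c 0 = 0.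
Proof.
  intros [H0 _] Hc. unfold kk. replace (c * 0) with 0 by ring. rewrite H0, Rmult_0_l. field. auto.
Qed.

Lemma Eq_zero phi r0 r : phi_ok phi -> 0 < r0 -> 0 < r -> r <> r0 -> Eq phi r0 r 0 = 0.
Proof.
  intros [H0 _] Hr0 Hr Hne. unfold Eq. rewrite !Rmult_0_r, H0. field. lra.
Qed.

Lemma E_unif phi r0 : phi_ok phi -> diffble phi -> 0 < r0 ->
  forall eps, 0 < eps -> exists del, 0 < del <= r0 / 2 /\
    forall r x, Rabs (r - r0) < del -> r <> r0 -> 0 <= x ->
      Rabs (Eq phi r0 r x - kk phi r0 x) <= eps.
Proof.
  intros Hphi Hd Hr0 eps Heps.
  destruct (kk_cont_unif phi r0 Hphi Hd Hr0 eps Heps) as [del [Hdel Hk]].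
  exists del; split; auto.
  intros r x Hr Hne Hx.
  apply Rabs_def2 in Hr as Hr'. destruct Hr' as [Hr1 Hr2].
  assert (Hrp : 0 < r) by lra.
  destruct (Req_dec x 0) as [->|Hx0].
  { rewrite Eq_zero, kk_zero by (auto; lra). rewrite Rminus_0_r, Rabs_R0. lra. }
  destruct (E_mvt phi r0 r x Hphi Hd Hr0 Hrp Hne ltac:(lra)) as [c [Hc ->]].
  apply Hk; [|lra].
  destruct (Rle_dec r0 r).
  - rewrite Rmin_left in Hc by lra. rewrite Rmax_right in Hc by lra. apply Rabs_def1; lra.
  - rewrite Rmin_right in Hc by lra. rewrite Rmax_left in Hc by lra. apply Rabs_def1; lra.
Qed.


Lemma deriv_of_cauchy (F : R -> R) x0 :
  (forall eps, 0 < eps -> exists del, 0 < del /\ forall r r',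
     0 < Rabs (r - x0) < del -> 0 < Rabs (r' - x0) < del ->
     Rabs ((F r - F x0) / (r - x0) - (F r' - F x0) / (r' - x0)) <= eps) ->
  ex_derive F x0.
Proof.
  intros HC.
  set (Q := fun r => (F r - F x0) / (r - x0)).
  assert (Hl : exists l, filterlim Q (Rbar_locally' (Finite x0)) (locally l)).
  { apply (proj1 (filterlim_locally_cauchy (U := R_CompleteSpace) (F := Rbar_locally' (Finite x0)) Q)).
    intros eps. destruct (HC (eps / 2) ltac:(pose proof (cond_pos eps); lra)) as [d [Hd Hdd]].
    exists (fun r => 0 < Rabs (r - x0) < d). split.
    - exists (mkposreal d Hd). intros y Hy Hne. simpl. split.
      + apply Rabs_pos_lt. lra.
      + exact Hy.
    - intros u v Hu Hv. change (Rabs (Q v - Q u) < eps).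
      specialize (Hdd v u Hv Hu). unfold Q. pose proof (cond_pos eps). lra. }
  destruct Hl as [l Hl].
  exists l. apply is_derive_Reals. intros eps Heps.
  destruct (Hl (fun v => Rabs (v - l) < eps)) as [d Hd].
  { exists (mkposreal eps Heps). intros v Hv. exact Hv. }
  exists d. intros h Hh0 Hh.
  assert (H := Hd (x0 + h)).
  unfold Q in H. replace (x0 + h - x0) with h in H by ring.
  apply H; [|lra]. change (Rabs (x0 + h - x0) < d). replace (x0 + h - x0) with h by ring. auto.
Qed.

Definition kf (phi g : R -> R) (r s : R) := G phi (r * s) * g s.
Definition Hf (phi g : R -> R) (r : R) := RInt_gen (kf phi g r) (at_point 0) (Rbar_locally p_infty).

Definition g_ok (g : R -> R) : Prop :=
  (forall s, 0 < s -> 0 <= g s <= 1) /\ (forall x y, 0 < x -> x <= y -> g y <= g x).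

Lemma kf_int phi g r B : phi_ok phi -> g_ok g -> 0 < r -> 0 <= B -> ex_RInt (kf phi g r) 0 B.
Proof.
  intros Hphi [Hgb Hgd] Hr HB. apply ex_RInt_decr_oc with 1; [lra| |].
  - intros x y Hx Hxy Hy. unfold kf.
    assert (H1 := G_rs_decr phi r Hphi Hr x y Hx Hxy).
    destruct (G_bounds phi (r * y) Hphi ltac:(nra)).
    destruct (Hgb y ltac:(lra)). specialize (Hgd x y Hx Hxy). nra.
  - intros x Hx. unfold kf. destruct (G_bounds phi (r * x) Hphi ltac:(nra)).
    destruct (Hgb x ltac:(lra)). nra.
Qed.

Lemma kf_nonneg phi g r s : phi_ok phi -> g_ok g -> 0 < r -> 0 < s -> 0 <= kf phi g r s.
Proof.
  intros Hphi [Hgb _] Hr Hs. unfold kf. destruct (G_bounds phi (r * s) Hphi ltac:(nra)).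
  destruct (Hgb s Hs). nra.
Qed.

Lemma H_lim phi g r : phi_ok phi -> diffble phi -> g_ok g -> 0 < r ->
  filterlim (fun B => RInt (kf phi g r) 0 B) (Rbar_locally p_infty) (locally (Hf phi g r)).
Proof.
  intros Hphi Hd Hg Hr.
  destruct (incr_bounded_lim (fun B => RInt (kf phi g r) 0 B) (/ r)) as [l [Hl _]].
  - intros x y Hx Hxy.
    assert (Hex := kf_int phi g r y Hphi Hg Hr ltac:(lra)).
    assert (H1 : ex_RInt (kf phi g r) 0 x) by (apply Rchasles1 with y; [lra|auto]).
    assert (H2 : ex_RInt (kf phi g r) x y) by (apply Rchasles2 with 0; [lra|auto]).
    rewrite (Runique _ _ _ _ (RChasles _ 0 x y _ _ (Rcorrect _ _ _ H1) (Rcorrect _ _ _ H2))).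
    assert (0 <= RInt (kf phi g r) x y); [|lra].
    apply RInt_ge_0; [lra|auto|]. intros t Ht. apply kf_nonneg; auto; lra.
  - intros x Hx.
    apply Rle_trans with (RInt (fun s => G phi (r * s)) 0 x).
    + apply RInt_le; [lra|apply kf_int; auto; lra|apply ex_RInt_G; auto; lra|].
      intros t Ht. unfold kf. destruct Hg as [Hgb _]. destruct (Hgb t ltac:(lra)).
      destruct (G_bounds phi (r * t) Hphi ltac:(nra)). nra.
    + rewrite (Runique _ _ _ _ (FTC0 phi r x Hphi Hd Hr ltac:(lra))).
      pose proof Hphi as [_ [_ [H1 _]]]. specialize (H1 (r * x) ltac:(nra)).
      unfold Rdiv. rewrite <- (Rmult_1_l (/ r)) at 2. apply Rmult_le_compat_r; [left; apply Rinv_0_lt_compat; lra|auto].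
  - assert (HH : Hf phi g r = l).
    { unfold Hf. apply RInt_gen_lim; auto. intros B HB. apply kf_int; auto; lra. }
    rewrite HH. exact Hl.
Qed.

Definition Ik (phi g : R -> R) (r B : R) := RInt (kf phi g r) 0 B.

Lemma abel_step phi g r0 r r' B M :
  phi_ok phi -> diffble phi -> g_ok g -> 0 < r0 -> 0 < r -> 0 < r' -> r <> r0 -> r' <> r0 -> 0 < B ->
  (forall x, 0 <= x -> Rabs (Eq phi r0 r x - Eq phi r0 r' x) <= M) ->
  Rabs ((Ik phi g r B - Ik phi g r0 B) / (r - r0) - (Ik phi g r' B - Ik phi g r0 B) / (r' - r0)) <= M.
Proof.
  intros Hphi Hd Hg Hr0 Hr Hr' Hne Hne' HB HM.
  pose proof Hg as [Hgb Hgd].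
  assert (Hrr : r - r0 <> 0) by lra. assert (Hrr' : r' - r0 <> 0) by lra.
  set (f := fun s => (G phi (r * s) - G phi (r0 * s)) / (r - r0) - (G phi (r' * s) - G phi (r0 * s)) / (r' - r0)).
  assert (Hfint : forall x, 0 <= x -> is_RInt f 0 x (Eq phi r0 r x - Eq phi r0 r' x)).
  { intros x Hx.
    assert (A1 := FTC0 phi r x Hphi Hd Hr Hx).
    assert (A0 := FTC0 phi r0 x Hphi Hd Hr0 Hx).
    assert (A2 := FTC0 phi r' x Hphi Hd Hr' Hx).
    assert (C1 := Rscal_int _ 0 x (/ (r - r0)) _ (Rminus_int _ _ 0 x _ _ A1 A0)).
    assert (C2 := Rscal_int _ 0 x (/ (r' - r0)) _ (Rminus_int _ _ 0 x _ _ A2 A0)).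
    assert (C3 := Rminus_int _ _ 0 x _ _ C1 C2).
    unfold Eq.
    replace ((phi (r * x) / r - phi (r0 * x) / r0) / (r - r0) - (phi (r' * x) / r' - phi (r0 * x) / r0) / (r' - r0))
      with (/ (r - r0) * (phi (r * x) / r - phi (r0 * x) / r0) - / (r' - r0) * (phi (r' * x) / r' - phi (r0 * x) / r0))
      by (field; lra).
    apply Rext with (2 := C3). intros t _. unfold f. field. lra. }
  set (h := fun s => if Rle_dec s 0 then 1 else g s).
  assert (Hkf : forall r1, 0 < r1 -> is_RInt (kf phi g r1) 0 B (Ik phi g r1 B)).
  { intros r1 Hr1. apply Rcorrect. apply kf_int; auto; lra. }
  assert (Hfh : is_RInt (fun s => f s * h s) 0 B
     ((Ik phi g r B - Ik phi g r0 B) / (r - r0) - (Ik phi g r' B - Ik phi g r0 B) / (r' - r0))).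
  { assert (C1 := Rscal_int _ 0 B (/ (r - r0)) _ (Rminus_int _ _ 0 B _ _ (Hkf r Hr) (Hkf r0 Hr0))).
    assert (C2 := Rscal_int _ 0 B (/ (r' - r0)) _ (Rminus_int _ _ 0 B _ _ (Hkf r' Hr') (Hkf r0 Hr0))).
    assert (C3 := Rminus_int _ _ 0 B _ _ C1 C2).
    replace ((Ik phi g r B - Ik phi g r0 B) / (r - r0) - (Ik phi g r' B - Ik phi g r0 B) / (r' - r0))
      with (/ (r - r0) * (Ik phi g r B - Ik phi g r0 B) - / (r' - r0) * (Ik phi g r' B - Ik phi g r0 B))
      by (field; lra).
    apply Rext with (2 := C3). intros t Ht.
    rewrite Rmin_left in Ht by lra. rewrite Rmax_right in Ht by lra.
    unfold f, h, kf. destruct (Rle_dec t 0); [lra|]. field. lra. }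
  rewrite <- (Runique _ _ _ _ Hfh).
  replace M with (M * h 0) by (unfold h; destruct (Rle_dec 0 0); [ring|lra]).
  apply (abel f h 0 B (/ Rabs (r - r0) + / Rabs (r' - r0)) M).
  - lra.
  - intros x y Hx Hxy Hy. unfold h.
    destruct (Rle_dec y 0); destruct (Rle_dec x 0); try lra.
    + apply Hgb; lra.
    + apply Hgd; lra.
  - intros x Hx. unfold h. destruct (Rle_dec x 0); [lra|]. apply Hgb; lra.
  - eexists. apply Hfint. lra.
  - eexists. exact Hfh.
  - intros x Hx.
    assert (0 < / Rabs (r - r0)) by (apply Rinv_0_lt_compat, Rabs_pos_lt; auto).
    assert (0 < / Rabs (r' - r0)) by (apply Rinv_0_lt_compat, Rabs_pos_lt; auto).
    destruct (Req_dec x 0) as [->|Hx0].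
    + replace (f 0) with 0 by (unfold f; rewrite !Rmult_0_r; field; lra). rewrite Rabs_R0. lra.
    + unfold f. assert (0 < x) by lra. destruct (G_bounds phi (r * x) Hphi ltac:(nra)).
      destruct (G_bounds phi (r0 * x) Hphi ltac:(nra)).
      destruct (G_bounds phi (r' * x) Hphi ltac:(nra)).
      apply Rle_trans with (Rabs ((G phi (r * x) - G phi (r0 * x)) / (r - r0)) + Rabs ((G phi (r' * x) - G phi (r0 * x)) / (r' - r0))).
      { unfold Rminus at 1. rewrite <- (Rabs_Ropp ((G phi (r' * x) - G phi (r0 * x)) / (r' - r0))). apply Rabs_triang. }
      unfold Rdiv. rewrite !Rabs_mult, !Rabs_inv.
      assert (0 < / Rabs (r - r0)) by (apply Rinv_0_lt_compat, Rabs_pos_lt; auto).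
      assert (0 < / Rabs (r' - r0)) by (apply Rinv_0_lt_compat, Rabs_pos_lt; auto).
      assert (Rabs (G phi (r * x) - G phi (r0 * x)) <= 1) by (apply Rabs_le; lra).
      assert (Rabs (G phi (r' * x) - G phi (r0 * x)) <= 1) by (apply Rabs_le; lra).
      assert (0 <= Rabs (G phi (r * x) - G phi (r0 * x))) by apply Rabs_pos.
      assert (0 <= Rabs (G phi (r' * x) - G phi (r0 * x))) by apply Rabs_pos.
      nra.
  - intros x Hx. rewrite (Runique _ _ _ _ (Hfint x ltac:(lra))). apply HM. lra.
Qed.

Lemma lim_near (u : R -> R) l e : filterlim u (Rbar_locally p_infty) (locally l) -> 0 < e ->
  exists M, forall B, M < B -> Rabs (u B - l) < e.
Proof.
  intros Hl He. destruct (Hl (fun v => Rabs (v - l) < e)) as [M HM].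
  { exists (mkposreal e He). intros v Hv. exact Hv. }
  exists M. intros B HB. apply HM. auto.
Qed.

Lemma Hf_deriv phi g r0 : phi_ok phi -> diffble phi -> g_ok g -> 0 < r0 -> ex_derive (Hf phi g) r0.
Proof.
  intros Hphi Hd Hg Hr0.
  apply deriv_of_cauchy. intros eps Heps.
  destruct (E_unif phi r0 Hphi Hd Hr0 (eps / 4) ltac:(lra)) as [del [[Hdel0 Hdel1] HE]].
  exists del; split; auto. intros r r' [Hra Hrb] [Hr'a Hr'b].
  assert (Hne : r <> r0) by (intros ->; rewrite Rminus_diag, Rabs_R0 in Hra; lra).
  assert (Hne' : r' <> r0) by (intros ->; rewrite Rminus_diag, Rabs_R0 in Hr'a; lra).
  assert (Hr : 0 < r) by (apply Rabs_def2 in Hrb; lra).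
  assert (Hr' : 0 < r') by (apply Rabs_def2 in Hr'b; lra).
  assert (HM : forall x, 0 <= x -> Rabs (Eq phi r0 r x - Eq phi r0 r' x) <= eps / 2).
  { intros x Hx. assert (E1 := HE r x Hrb Hne Hx). assert (E2 := HE r' x Hr'b Hne' Hx).
    replace (Eq phi r0 r x - Eq phi r0 r' x) with ((Eq phi r0 r x - kk phi r0 x) + - (Eq phi r0 r' x - kk phi r0 x)) by ring.
    apply Rle_trans with (Rabs (Eq phi r0 r x - kk phi r0 x) + Rabs (- (Eq phi r0 r' x - kk phi r0 x))); [apply Rabs_triang|].
    rewrite Rabs_Ropp. lra. }
  assert (Hmain : Rabs ((Hf phi g r - Hf phi g r0) / (r - r0) - (Hf phi g r' - Hf phi g r0) / (r' - r0)) <= eps / 2).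
  { apply le_epsilon. intros eta Heta.
    set (a := / Rabs (r - r0) + / Rabs (r' - r0)).
    assert (Ha1 : 0 < / Rabs (r - r0)) by (apply Rinv_0_lt_compat; lra).
    assert (Ha2 : 0 < / Rabs (r' - r0)) by (apply Rinv_0_lt_compat; lra).
    set (e' := eta / (2 * a + 1)).
    assert (He' : 0 < e') by (unfold e', a; apply Rdiv_lt_0_compat; lra).
    destruct (lim_near _ _ e' (H_lim phi g r Hphi Hd Hg Hr) He') as [M1 HM1].
    destruct (lim_near _ _ e' (H_lim phi g r0 Hphi Hd Hg Hr0) He') as [M0 HM0].
    destruct (lim_near _ _ e' (H_lim phi g r' Hphi Hd Hg Hr') He') as [M2 HM2].
    set (B := Rmax (Rmax M1 M0) (Rmax M2 0) + 1).
    assert (HB1 : M1 < B) by (unfold B; pose proof (Rmax_l M1 M0); pose proof (Rmax_l (Rmax M1 M0) (Rmax M2 0)); lra).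
    assert (HB0 : M0 < B) by (unfold B; pose proof (Rmax_r M1 M0); pose proof (Rmax_l (Rmax M1 M0) (Rmax M2 0)); lra).
    assert (HB2 : M2 < B) by (unfold B; pose proof (Rmax_l M2 0); pose proof (Rmax_r (Rmax M1 M0) (Rmax M2 0)); lra).
    assert (HBp : 0 < B) by (unfold B; pose proof (Rmax_r M2 0); pose proof (Rmax_r (Rmax M1 M0) (Rmax M2 0)); lra).
    specialize (HM1 B HB1). specialize (HM0 B HB0). specialize (HM2 B HB2).
    assert (HD := abel_step phi g r0 r r' B (eps / 2) Hphi Hd Hg Hr0 Hr Hr' Hne Hne' HBp HM).
    unfold Ik in HD.
    set (I1 := RInt (kf phi g r) 0 B) in *. set (I0 := RInt (kf phi g r0) 0 B) in *.
    set (I2 := RInt (kf phi g r') 0 B) in *.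
    set (D := (I1 - I0) / (r - r0) - (I2 - I0) / (r' - r0)) in *.
    replace ((Hf phi g r - Hf phi g r0) / (r - r0) - (Hf phi g r' - Hf phi g r0) / (r' - r0))
      with (D + (((Hf phi g r - I1) - (Hf phi g r0 - I0)) * / (r - r0) - ((Hf phi g r' - I2) - (Hf phi g r0 - I0)) * / (r' - r0)))
      by (unfold D; field; lra).
    apply Rle_trans with (Rabs D + Rabs (((Hf phi g r - I1) - (Hf phi g r0 - I0)) * / (r - r0) - ((Hf phi g r' - I2) - (Hf phi g r0 - I0)) * / (r' - r0))); [apply Rabs_triang|].
    assert (Herr : Rabs (((Hf phi g r - I1) - (Hf phi g r0 - I0)) * / (r - r0) - ((Hf phi g r' - I2) - (Hf phi g r0 - I0)) * / (r' - r0)) <= 2 * e' * a).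
    { unfold Rminus at 1.
      apply Rle_trans with (Rabs (((Hf phi g r - I1) - (Hf phi g r0 - I0)) * / (r - r0)) + Rabs (- (((Hf phi g r' - I2) - (Hf phi g r0 - I0)) * / (r' - r0)))); [apply Rabs_triang|].
      rewrite Rabs_Ropp, !Rabs_mult, !Rabs_inv.
      rewrite Rabs_minus_sym in HM1, HM0, HM2.
      assert (Rabs ((Hf phi g r - I1) - (Hf phi g r0 - I0)) <= 2 * e').
      { unfold Rminus at 1. apply Rle_trans with (Rabs (Hf phi g r - I1) + Rabs (- (Hf phi g r0 - I0))); [apply Rabs_triang|].
        rewrite Rabs_Ropp. lra. }
      assert (Rabs ((Hf phi g r' - I2) - (Hf phi g r0 - I0)) <= 2 * e').
      { unfold Rminus at 1. apply Rle_trans with (Rabs (Hf phi g r' - I2) + Rabs (- (Hf phi g r0 - I0))); [apply Rabs_triang|].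
        rewrite Rabs_Ropp. lra. }
      unfold a. nra. }
    assert (2 * e' * a <= eta).
    { unfold e'. apply Rmult_le_reg_r with (2 * a + 1); [unfold a; lra|].
      replace (2 * (eta / (2 * a + 1)) * a * (2 * a + 1)) with (eta * (2 * a)) by (field; unfold a; lra).
      unfold a; nra. }
    lra. }
  lra.
Qed.


Lemma lim_lin (f g : R -> R) a b k :
  filterlim f (at_right 0) (locally a) -> filterlim g (at_right 0) (locally b) ->
  filterlim (fun s => f s + k * g s) (at_right 0) (locally (a + k * b)).
Proof.
  intros Hf Hg P [eps HP].
  set (e := eps / (2 * (Rabs k + 1))).
  assert (He : 0 < e) by (unfold e; apply Rdiv_lt_0_compat; [apply cond_pos|pose proof (Rabs_pos k); lra]).
  assert (H1 := Hf (fun v => Rabs (v - a) < e) ltac:(exists (mkposreal e He); intros v Hv; exact Hv)).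
  assert (H2 := Hg (fun v => Rabs (v - b) < e) ltac:(exists (mkposreal e He); intros v Hv; exact Hv)).
  unfold filtermap in H1, H2.
  assert (H3 := filter_and _ _ H1 H2).
  unfold filtermap. apply filter_imp with (2 := H3). intros s [Hs1 Hs2]. apply HP.
  change (Rabs (f s + k * g s - (a + k * b)) < eps).
  replace (f s + k * g s - (a + k * b)) with ((f s - a) + k * (g s - b)) by ring.
  apply Rle_lt_trans with (Rabs (f s - a) + Rabs (k * (g s - b))); [apply Rabs_triang|].
  rewrite Rabs_mult.
  assert (Rabs k * Rabs (g s - b) <= Rabs k * e) by (apply Rmult_le_compat_l; [apply Rabs_pos|lra]).
  assert (Hee : e + Rabs k * e < eps).
  { unfold e. replace (eps / (2 * (Rabs k + 1)) + Rabs k * (eps / (2 * (Rabs k + 1)))) with (eps / 2)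
      by (field; pose proof (Rabs_pos k); lra). pose proof (cond_pos eps); lra. }
  lra.
Qed.

Lemma lim_le (f : R -> R) l c :
  filterlim f (at_right 0) (locally l) -> at_right 0 (fun s => f s <= c) -> l <= c.
Proof.
  intros Hl Hc. destruct (Rle_dec l c) as [?|Hn]; auto. exfalso.
  assert (He : 0 < l - c) by lra.
  assert (H1 := Hl (fun v => c < v) ltac:(exists (mkposreal _ He); intros v Hv; change (Rabs (v - l) < l - c) in Hv; apply Rabs_def2 in Hv; lra)).
  unfold filtermap in H1.
  destruct (filter_ex _ (filter_and _ _ H1 Hc)) as [s [Hs1 Hs2]]. lra.
Qed.

Lemma lim_ge (f : R -> R) l c :
  filterlim f (at_right 0) (locally l) -> at_right 0 (fun s => c <= f s) -> c <= l.
Proof.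
  intros Hl Hc. destruct (Rle_dec c l) as [?|Hn]; auto. exfalso.
  assert (He : 0 < c - l) by lra.
  assert (H1 := Hl (fun v => v < c) ltac:(exists (mkposreal _ He); intros v Hv; change (Rabs (v - l) < c - l) in Hv; apply Rabs_def2 in Hv; lra)).
  unfold filtermap in H1.
  destruct (filter_ex _ (filter_and _ _ H1 Hc)) as [s [Hs1 Hs2]]. lra.
Qed.

Lemma at_right_small (w : R) : 0 <= w -> at_right 0 (fun s => 0 < s /\ s * w <= 1).
Proof.
  intros Hw. exists (mkposreal (/ (w + 1)) ltac:(apply Rinv_0_lt_compat; lra)).
  intros s Hs Hs0. simpl in Hs. change (Rabs (s - 0) < / (w + 1)) in Hs.
  rewrite Rminus_0_r, Rabs_right in Hs by lra. split; auto.
  apply Rmult_lt_compat_r with (r := w + 1) in Hs; [|lra].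
  rewrite Rinv_l in Hs by lra. nra.
Qed.

Lemma ev_small (P : R -> Prop) (w : R) : 0 <= w -> (forall s, 0 < s -> s * w <= 1 -> P s) -> at_right 0 P.
Proof.
  intros Hw HP. apply filter_imp with (2 := at_right_small w Hw). intros s [Hs1 Hs2]. auto.
Qed.

Definition tq (C : R -> R -> R) (a b s : R) := C (s * a) (s * b) / s.

Lemma L_props (L : R -> R -> R) (C : R -> R -> R) :
  is_copula2 C -> is_tdf_of C L ->
  (forall a, 0 <= a -> L a 0 = 0) /\ (forall b, 0 <= b -> L 0 b = 0) /\
  (forall a1 a2 b1 b2, 0 <= a1 -> a1 <= a2 -> 0 <= b1 -> b1 <= b2 ->
      0 <= L a2 b2 - L a2 b1 - L a1 b2 + L a1 b1) /\
  (forall a b1 b2, 0 <= a -> 0 <= b1 -> b1 <= b2 -> L a b2 - L a b1 <= b2 - b1) /\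
  (forall a1 a2 b, 0 <= a1 -> a1 <= a2 -> 0 <= b -> L a2 b - L a1 b <= a2 - a1).
Proof.
  intros [Cb [C0 [C1 C2]]] HL.
  split; [|split; [|split; [|split]]].
  - intros a Ha. specialize (HL a 0 Ha (Rle_refl 0)).
    assert (Hev : at_right 0 (fun s => C (s * a) (s * 0) / s = 0)).
    { apply (ev_small _ a Ha). intros s Hs1 Hs2. rewrite Rmult_0_r.
      rewrite (proj1 (C0 (s * a) ltac:(nra))). unfold Rdiv. ring. }
    apply Rle_antisym.
    + apply (lim_le _ _ _ HL). apply filter_imp with (2 := Hev). intros s Hs; lra.
    + apply (lim_ge _ _ _ HL). apply filter_imp with (2 := Hev). intros s Hs; lra.
  - intros b Hb. specialize (HL 0 b (Rle_refl 0) Hb).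
    assert (Hev : at_right 0 (fun s => C (s * 0) (s * b) / s = 0)).
    { apply (ev_small _ b Hb). intros s Hs1 Hs2. rewrite Rmult_0_r.
      rewrite (proj2 (C0 (s * b) ltac:(nra))). unfold Rdiv. ring. }
    apply Rle_antisym.
    + apply (lim_le _ _ _ HL). apply filter_imp with (2 := Hev). intros s Hs; lra.
    + apply (lim_ge _ _ _ HL). apply filter_imp with (2 := Hev). intros s Hs; lra.
  - intros a1 a2 b1 b2 Ha1 Ha12 Hb1 Hb12.
    assert (H := lim_lin _ _ _ _ 1 (lim_lin _ _ _ _ (-1) (lim_lin _ _ _ _ (-1)
              (HL a2 b2 ltac:(lra) ltac:(lra)) (HL a2 b1 ltac:(lra) ltac:(lra)))
              (HL a1 b2 ltac:(lra) ltac:(lra))) (HL a1 b1 ltac:(lra) ltac:(lra))).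
    replace (L a2 b2 - L a2 b1 - L a1 b2 + L a1 b1) with
      (L a2 b2 + -1 * L a2 b1 + -1 * L a1 b2 + 1 * L a1 b1) by ring.
    apply (lim_ge _ _ _ H). apply (ev_small _ (a2 + b2)); [lra|]. intros s Hs1 Hs2.
    assert (HC := C2 (s * a1) (s * a2) (s * b1) (s * b2) ltac:(nra) ltac:(nra) ltac:(nra) ltac:(nra) ltac:(nra) ltac:(nra)).
    replace (C (s * a2) (s * b2) / s + -1 * (C (s * a2) (s * b1) / s) + -1 * (C (s * a1) (s * b2) / s) + 1 * (C (s * a1) (s * b1) / s))
      with ((C (s * a2) (s * b2) - C (s * a2) (s * b1) - C (s * a1) (s * b2) + C (s * a1) (s * b1)) / s) by (field; lra).
    apply Rmult_le_pos; [lra|left; apply Rinv_0_lt_compat; lra].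
  - intros a b1 b2 Ha Hb1 Hb12.
    assert (H := lim_lin _ _ _ _ (-1) (HL a b2 ltac:(lra) ltac:(lra)) (HL a b1 ltac:(lra) ltac:(lra))).
    replace (L a b2 - L a b1) with (L a b2 + -1 * L a b1) by ring.
    apply (lim_le _ _ _ H). apply (ev_small _ (a + b2)); [lra|]. intros s Hs1 Hs2.
    assert (HC := C2 (s * a) 1 (s * b1) (s * b2) ltac:(nra) ltac:(nra) ltac:(lra) ltac:(nra) ltac:(nra) ltac:(nra)).
    rewrite (proj2 (C1 (s * b2) ltac:(split; nra))), (proj2 (C1 (s * b1) ltac:(split; nra))) in HC.
    replace (C (s * a) (s * b2) / s + -1 * (C (s * a) (s * b1) / s)) with ((C (s * a) (s * b2) - C (s * a) (s * b1)) / s) by (field; lra).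
    apply Rmult_le_reg_r with s; [lra|]. unfold Rdiv. rewrite Rmult_assoc, Rinv_l by lra. nra.
  - intros a1 a2 b Ha1 Ha12 Hb.
    assert (H := lim_lin _ _ _ _ (-1) (HL a2 b ltac:(lra) ltac:(lra)) (HL a1 b ltac:(lra) ltac:(lra))).
    replace (L a2 b - L a1 b) with (L a2 b + -1 * L a1 b) by ring.
    apply (lim_le _ _ _ H). apply (ev_small _ (a2 + b)); [lra|]. intros s Hs1 Hs2.
    assert (HC := C2 (s * a1) (s * a2) (s * b) 1 ltac:(nra) ltac:(nra) ltac:(nra) ltac:(nra) ltac:(nra) ltac:(lra)).
    rewrite (proj1 (C1 (s * a2) ltac:(split; nra))), (proj1 (C1 (s * a1) ltac:(split; nra))) in HC.
    replace (C (s * a2) (s * b) / s + -1 * (C (s * a1) (s * b) / s)) with ((C (s * a2) (s * b) - C (s * a1) (s * b)) / s) by (field; lra).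
    apply Rmult_le_reg_r with s; [lra|]. unfold Rdiv. rewrite Rmult_assoc, Rinv_l by lra. nra.
Qed.

Lemma at_right_scale c : 0 < c -> filterlim (fun s => s * c) (at_right 0) (at_right 0).
Proof.
  intros Hc P [eps HP].
  exists (mkposreal (eps / c) ltac:(apply Rdiv_lt_0_compat; [apply cond_pos|lra])).
  intros s Hs Hs0. simpl in Hs. change (Rabs (s - 0) < eps / c) in Hs.
  rewrite Rminus_0_r, Rabs_right in Hs by lra.
  apply HP.
  - change (Rabs (s * c - 0) < eps). rewrite Rminus_0_r, Rabs_right by nra.
    apply Rmult_lt_compat_r with (r := c) in Hs; [|lra].
    replace (eps / c * c) with (pos eps) in Hs by (field; lra). exact Hs.
  - nra.
Qed.

Lemma L_hom (L C : R -> R -> R) : is_copula2 C -> is_tdf_of C L ->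
  forall c a b, 0 < c -> 0 <= a -> 0 <= b -> L (c * a) (c * b) = c * L a b.
Proof.
  intros HC HL c a b Hc Ha Hb.
  assert (H1 := HL (c * a) (c * b) ltac:(nra) ltac:(nra)).
  assert (H2 := filterlim_comp _ _ _ (fun s => s * c) (fun s => C (s * a) (s * b) / s) _ _ _ (at_right_scale c Hc) (HL a b Ha Hb)).
  assert (H3 := lim_lin (fun _ => 0) _ 0 _ c (filterlim_const 0) H2).
  simpl in H3. rewrite Rplus_0_l in H3.
  assert (H4 : filterlim (fun s => C (s * (c * a)) (s * (c * b)) / s) (at_right 0) (locally (c * L a b))).
  { apply (filterlim_ext_loc (fun s => 0 + c * (C (s * c * a) (s * c * b) / (s * c)))); [|exact H3].
    exists (mkposreal 1 Rlt_0_1). intros s _ Hs.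
    replace (s * (c * a)) with (s * c * a) by ring. replace (s * (c * b)) with (s * c * b) by ring.
    field. lra. }
  exact (filterlim_locally_unique _ _ _ H1 H4).
Qed.

Definition phiL (L : R -> R -> R) : R -> R := fun y => L 1 y.

Lemma M2_phi_ok L : in_M2 L -> phi_ok (phiL L).
Proof.
  intros [C [HC HL]].
  destruct (L_props L C HC HL) as [La0 [L0b [L2 [Llip2 Llip1]]]].
  assert (Hh := L_hom L C HC HL).
  unfold phiL. split; [|split; [|split]].
  - apply La0; lra.
  - intros y z Hyz. split.
    + assert (H := L2 0 1 y z ltac:(lra) ltac:(lra) ltac:(lra) ltac:(lra)).
      rewrite !L0b in H by lra. lra.
    + apply Llip2; lra.
  - intros y Hy. assert (H := Llip1 0 1 y ltac:(lra) ltac:(lra) Hy). rewrite L0b in H by lra. lra.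
  - intros l y z Hl Hyz.
    assert (H := L2 l 1 (l * y) (l * z) ltac:(lra) ltac:(lra) ltac:(nra) ltac:(nra)).
    assert (E1 : L l (l * z) = l * L 1 z) by (rewrite <- Hh by lra; rewrite Rmult_1_r; reflexivity).
    assert (E2 : L l (l * y) = l * L 1 y) by (rewrite <- Hh by lra; rewrite Rmult_1_r; reflexivity).
    rewrite E1, E2 in H. lra.
Qed.

Lemma L_hom_M2 L : in_M2 L -> forall c a b, 0 < c -> 0 <= a -> 0 <= b -> L (c * a) (c * b) = c * L a b.
Proof. intros [C [HC HL]]. apply (L_hom L C HC HL). Qed.

Lemma Derive_L L w t : in_M2 L -> 0 < w -> 0 < t ->
  Derive (fun s => L w s) t = G (phiL L) (t / w).
Proof.
  intros HM Hw Ht.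
  assert (Hphi := M2_phi_ok L HM).
  apply Derive_right.
  destruct (G_spec (phiL L) (t / w) Hphi ltac:(apply Rdiv_lt_0_compat; lra)) as [Hl _].
  assert (Hsc : filterlim (fun h => h * / w) (at_right 0) (at_right 0)) by (apply at_right_scale; apply Rinv_0_lt_compat; lra).
  assert (H := filterlim_comp _ _ _ _ _ _ _ _ Hsc Hl).
  apply (filterlim_ext_loc (fun h => dq (phiL L) (t / w) (h * / w))); [|exact H].
  apply (ev_small _ 0 (Rle_refl 0)). intros h Hh _. unfold dq, phiL.
  assert (E1 : L w (t + h) = w * L 1 ((t + h) / w)).
  { rewrite <- L_hom_M2 by (auto; try lra; apply Rdiv_le_0_compat; lra). f_equal; field; lra. }
  assert (E2 : L w t = w * L 1 (t / w)).
  { rewrite <- L_hom_M2 by (auto; try lra; apply Rdiv_le_0_compat; lra). f_equal; field; lra. }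
  rewrite E1, E2. replace (t / w + h * / w) with ((t + h) / w) by (field; lra).
  field. split; lra.
Qed.


Definition LT (L : R -> R -> R) : R -> R -> R := fun a b => L b a.

Lemma M2_LT L : in_M2 L -> in_M2 (LT L).
Proof.
  intros [C [[Cb [C0 [C1 C2]]] HL]].
  exists (fun u v => C v u). split.
  - split; [|split; [|split]].
    + intros u v Hu Hv. apply Cb; auto.
    + intros u Hu. destruct (C0 u Hu). split; auto.
    + intros u Hu. destruct (C1 u Hu). split; auto.
    + intros u1 u2 v1 v2 H1 H2 H3 H4 H5 H6.
      assert (H := C2 v1 v2 u1 u2 H4 H5 H6 H1 H2 H3). lra.
  - intros w1 w2 Hw1 Hw2. unfold LT. apply (HL w2 w1 Hw2 Hw1).
Qed.

Lemma g_ok_G L : in_M2 L -> g_ok (G (phiL L)).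
Proof.
  intros HM. assert (Hphi := M2_phi_ok L HM). split.
  - intros s Hs. apply G_bounds; auto.
  - intros x y Hx Hxy. apply G_decr; auto.
Qed.

Lemma diffble_phiL L : in_M2 L -> hat_differentiable L -> diffble (phiL L).
Proof.
  intros HM Hd y Hy.
  apply (ex_derive_ext_loc (fun y => (1 + y) * hat L (1 / (1 + y)))).
  - exists (mkposreal y Hy). intros z Hz. change (Rabs (z - y) < y) in Hz.
    apply Rabs_def2 in Hz. unfold hat, phiL.
    assert (E := L_hom_M2 L HM (1 + z) (1 / (1 + z)) (1 - 1 / (1 + z)) ltac:(lra)
                 ltac:(apply Rdiv_le_0_compat; lra)
                 ltac:(apply Rmult_le_reg_r with (1 + z); [lra|]; unfold Rdiv; rewrite Rmult_minus_distr_r, Rmult_assoc, Rinv_l by lra; lra)).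
    rewrite <- E. f_equal; field; lra.
  - auto_derive. split; [|lra].
    apply Hd. split.
    + apply Rdiv_lt_0_compat; lra.
    + apply Rmult_lt_reg_r with (1 + y); [lra|]. unfold Rdiv. rewrite Rmult_1_l, Rinv_l by lra. lra.
Qed.

Lemma mp_eq L1 L2 t : in_M2 L1 -> in_M2 L2 -> diffble (phiL L1) -> 0 < t < 1 ->
  markov_prod L1 L2 t (1 - t) = (1 - t) * Hf (phiL L1) (G (phiL (LT L2))) ((1 - t) / t).
Proof.
  intros HM1 HM2 Hd Ht.
  set (phi1 := phiL L1). set (g2 := G (phiL (LT L2))). set (r := (1 - t) / t).
  assert (Hphi1 : phi_ok phi1) by (apply M2_phi_ok; auto).
  assert (Hg2 : g_ok g2) by (apply g_ok_G, M2_LT; auto).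
  assert (Hr : 0 < r) by (unfold r; apply Rdiv_lt_0_compat; lra).
  set (P0 := fun x => Derive (fun s => L1 t s) x * Derive (fun s => L2 s (1 - t)) x).
  set (Pt := fun x => G phi1 (x / t) * g2 (x / (1 - t))).
  assert (HP0 : forall x, 0 < x -> P0 x = Pt x).
  { intros x Hx. unfold P0, Pt.
    rewrite (Derive_L L1 t x HM1 ltac:(lra) Hx).
    change (fun s => L2 s (1 - t)) with (fun s => LT L2 (1 - t) s).
    rewrite (Derive_L (LT L2) (1 - t) x (M2_LT L2 HM2) ltac:(lra) Hx). reflexivity. }
  assert (HPt_int : forall B, 0 < B -> ex_RInt Pt 0 B).
  { intros B HB. apply ex_RInt_decr_oc with 1; [lra| |].
    - intros x y Hx Hxy Hy. unfold Pt.
      assert (G phi1 (y / t) <= G phi1 (x / t)) by (apply G_decr; [auto|apply Rdiv_lt_0_compat; lra|apply Rmult_le_compat_r; [left; apply Rinv_0_lt_compat; lra|lra]]).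
      destruct Hg2 as [Hgb Hgd].
      assert (g2 (y / (1 - t)) <= g2 (x / (1 - t))) by (apply Hgd; [apply Rdiv_lt_0_compat; lra|apply Rmult_le_compat_r; [left; apply Rinv_0_lt_compat; lra|lra]]).
      destruct (G_bounds phi1 (y / t) Hphi1 ltac:(apply Rdiv_lt_0_compat; lra)).
      destruct (Hgb (y / (1 - t)) ltac:(apply Rdiv_lt_0_compat; lra)). nra.
    - intros x Hx. unfold Pt. destruct Hg2 as [Hgb Hgd].
      destruct (G_bounds phi1 (x / t) Hphi1 ltac:(apply Rdiv_lt_0_compat; lra)).
      destruct (Hgb (x / (1 - t)) ltac:(apply Rdiv_lt_0_compat; lra)). nra. }
  assert (HRI : forall B, 0 < B -> RInt P0 0 B = (1 - t) * Ik phi1 g2 r (B / (1 - t))).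
  { intros B HB.
    rewrite (RInt_ext P0 Pt) by (intros x Hx; rewrite Rmin_left in Hx by lra; rewrite Rmax_right in Hx by lra; apply HP0; lra).
    assert (Hex : ex_RInt Pt ((1 - t) * 0 + 0) ((1 - t) * (B / (1 - t)) + 0)).
    { replace ((1 - t) * 0 + 0) with 0 by ring. replace ((1 - t) * (B / (1 - t)) + 0) with B by (field; lra).
      apply HPt_int; auto. }
    assert (Hcl := RInt_comp_lin Pt (1 - t) 0 0 (B / (1 - t)) Hex).
    replace ((1 - t) * 0 + 0) with 0 in Hcl by ring. replace ((1 - t) * (B / (1 - t)) + 0) with B in Hcl by (field; lra).
    rewrite <- Hcl. unfold Ik.
    rewrite <- (RInt_scal (V := R_CompleteNormedModule)) by (apply kf_int; auto; apply Rdiv_le_0_compat; lra).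
    apply RInt_ext. intros x _. unfold Pt, kf. unfold scal; simpl; unfold mult; simpl.
    f_equal. unfold r. replace (((1 - t) * x + 0) / t) with ((1 - t) / t * x) by (field; lra).
    replace (((1 - t) * x + 0) / (1 - t)) with x by (field; lra). reflexivity. }
  unfold markov_prod. fold P0.
  apply RInt_gen_lim.
  - intros B HB. apply (ex_RInt_ext Pt); [|apply HPt_int; auto].
    intros x Hx. rewrite Rmin_left in Hx by lra. rewrite Rmax_right in Hx by lra. symmetry. apply HP0; lra.
  - intros P [eps HP].
    destruct (lim_near _ _ eps (H_lim phi1 g2 r Hphi1 Hd Hg2 Hr) (cond_pos eps)) as [M HM].
    exists (Rmax (M * (1 - t)) 0). intros B HB.
    assert (HB0 : 0 < B) by (pose proof (Rmax_r (M * (1 - t)) 0); lra).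
    assert (HBM : M < B / (1 - t)).
    { apply Rmult_lt_reg_r with (1 - t); [lra|]. unfold Rdiv. rewrite Rmult_assoc, Rinv_l by lra.
      pose proof (Rmax_l (M * (1 - t)) 0). lra. }
    apply HP. change (Rabs (RInt P0 0 B - (1 - t) * Hf phi1 g2 r) < eps).
    rewrite HRI by auto. specialize (HM _ HBM). unfold Ik.
    replace ((1 - t) * RInt (kf phi1 g2 r) 0 (B / (1 - t)) - (1 - t) * Hf phi1 g2 r)
      with ((1 - t) * (RInt (kf phi1 g2 r) 0 (B / (1 - t)) - Hf phi1 g2 r)) by ring.
    rewrite Rabs_mult, Rabs_right by lra.
    assert (0 <= Rabs (RInt (kf phi1 g2 r) 0 (B / (1 - t)) - Hf phi1 g2 r)) by apply Rabs_pos.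
    nra.
Qed.

Lemma case1 L1 L2 : in_M2 L1 -> in_M2 L2 -> hat_differentiable L1 -> hat_differentiable (markov_prod L1 L2).
Proof.
  intros HM1 HM2 Hd1 t Ht.
  assert (Hd := diffble_phiL L1 HM1 Hd1).
  apply (ex_derive_ext_loc (fun s => (1 - s) * Hf (phiL L1) (G (phiL (LT L2))) ((1 - s) / s))).
  - assert (Hm : 0 < Rmin t (1 - t)) by (apply Rmin_pos; lra).
    exists (mkposreal _ Hm). intros z Hz. change (Rabs (z - t) < Rmin t (1 - t)) in Hz.
    apply Rabs_def2 in Hz. pose proof (Rmin_l t (1 - t)). pose proof (Rmin_r t (1 - t)).
    unfold hat. symmetry. apply mp_eq; auto; lra.
  - auto_derive. split; [|lra].
    apply Hf_deriv; [apply M2_phi_ok; auto|auto|apply g_ok_G, M2_LT; auto|].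
    apply Rdiv_lt_0_compat; lra.
Qed.

Lemma mp_swap L1 L2 w1 w2 : markov_prod L1 L2 w1 w2 = markov_prod (LT L2) (LT L1) w2 w1.
Proof.
  unfold markov_prod, LT. f_equal. apply functional_extensionality. intros x. ring.
Qed.

Theorem mainTheorem8 (L1 L2 : R -> R -> R) :
  in_M2 L1 -> in_M2 L2 ->
  (hat_differentiable L1 \/ hat_differentiable L2) ->
  hat_differentiable (markov_prod L1 L2).
Proof.
  intros HM1 HM2 [H1|H2].
  - apply case1; auto.
  - assert (HT : hat_differentiable (LT L2)).
    { intros t Ht. apply (ex_derive_ext (fun s => hat L2 (1 - s))).
      - intros s. unfold hat, LT. f_equal. ring.
      - auto_derive. apply H2. lra. }
    assert (HC := case1 (LT L2) (LT L1) (M2_LT L2 HM2) (M2_LT L1 HM1) HT).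
    intros t Ht.
    apply (ex_derive_ext (fun s => hat (markov_prod (LT L2) (LT L1)) (1 - s))).
    + intros s. unfold hat. rewrite (mp_swap L1 L2). f_equal. ring.
    + auto_derive. apply HC. lra.
Qed.
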